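(* Let $l$ be a prime with $l\equiv 4\pmod 5$, let $j\in\mathbb{F}_l$ with $j\neq 0,1728$, and let $a_1\in\mathbb{F}_l$ be a root of $G(x^5,j)\equiv 0\pmod l$, where $G(x,j)=(x^4-228x^3+494x^2+228x+1)^3-jx(1-11x-x^2)^5$. Then $M(a_1)\in\mathbb{F}_{l^2}\setminus\mathbb{F}_l$ for every $M\in\bar G_{60}\setminus\bar H$.
   Context: Since $l\equiv 4\pmod 5$, a primitive $5$th root of unity $\zeta$ lies in $\mathbb{F}_{l^2}\setminus\mathbb{F}_l$; put $\sqrt5=\zeta-\zeta^2-\zeta^3+\zeta^4\in\mathbb{F}_l$. Let $\bar G_{60}$ be the group of linear fractional transformations over $\mathbb{F}_{l^2}$ generated by $S(z)=\zeta z$ and $T(z)=\dfrac{-(1+\sqrt5)z+2}{2z+1+\sqrt5}$ (it is isomorphic to $A_5$; it is the reduction of the icosahedral group $G_{60}$ defined by the same formulas over $\mathbb{Q}(\zeta_5)$). Let $U(z)=-1/z$ and $\bar H=\{1,T,U,TU\}\subset \bar G_{60}$. *)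

(* Defs.v *)
From mathcomp Require Import all_boot all_order all_algebra all_field.
Set Implicit Arguments. Unset Strict Implicit. Unset Printing Implicit Defensive.
Import GRing.Theory.
Local Open Scope ring_scope.

Section Icosa.
Variable K : fieldType.

Definition mx2 (a b c d : K) : 'M[K]_2 :=
  \matrix_(i < 2, k < 2)
    if i == 0 :> nat then (if k == 0 :> nat then a else b)
    else (if k == 0 :> nat then c else d).

Definition sqrt5 (z : K) : K := z - z ^+ 2 - z ^+ 3 + z ^+ 4.

Definition Smx (z : K) : 'M[K]_2 := mx2 z 0 0 1.
Definition Tmx (z : K) : 'M[K]_2 :=
  mx2 (- (1 + sqrt5 z)) 2 2 (1 + sqrt5 z).
Definition Umx : 'M[K]_2 := mx2 0 (-1) 1 0.

(* Matrix representatives of the elements of the group generated by S and T: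
   all finite compositions of S and T (since the group is finite, the monoid
   generated equals the group generated). *)
Inductive G60mx (z : K) : 'M[K]_2 -> Prop :=
  | G60_1 : G60mx z 1%:M
  | G60_S M : G60mx z M -> G60mx z (Smx z *m M)
  | G60_T M : G60mx z M -> G60mx z (Tmx z *m M).

(* M represents an element of H = {1, T, U, TU} (as linear fractional
   transformations, i.e. up to nonzero scalars) *)
Definition in_Hbar (z : K) (M : 'M[K]_2) : Prop :=
  exists c : K, c != 0 /\
    (M = c *: 1%:M \/ M = c *: Tmx z \/ M = c *: Umx \/ M = c *: (Tmx z *m Umx)).

Definition mobius (M : 'M[K]_2) (x : K) : K :=
  (M ord0 ord0 * x + M ord0 ord_max) / (M ord_max ord0 * x + M ord_max ord_max).

Definition Gfun (x j : K) : K :=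
  (x ^+ 4 - 228%:R * x ^+ 3 + 494%:R * x ^+ 2 + 228%:R * x + 1) ^+ 3
  - j * x * (1 - 11%:R * x - x ^+ 2) ^+ 5.

End Icosa.

(* Main.v *)
From Stdlib Require Import ZArith.
Require Import Defs.
From mathcomp Require Import all_boot all_order all_algebra all_field.
From mathcomp Require Import zify ssrZ ring.
Import GRing.Theory.
Local Open Scope ring_scope.
Delimit Scope Z_scope with Z.

Local Open Scope Z_scope.
Record zz := ZZ { z0 : Z; z1 : Z; z2 : Z; z3 : Z; z4 : Z }.
Arguments ZZ (_ _ _ _ _)%_Z.
Definition zc (n : Z) := ZZ n 0 0 0 0.
Arguments zc _%_Z.
Definition zadd (x y : zz) := ZZ (z0 x + z0 y) (z1 x + z1 y) (z2 x + z2 y) (z3 x + z3 y) (z4 x + z4 y).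
Definition zneg (x : zz) := ZZ (- z0 x) (- z1 x) (- z2 x) (- z3 x) (- z4 x).
Definition zmul (x y : zz) :=
  let: ZZ a0 a1 a2 a3 a4 := x in let: ZZ b0 b1 b2 b3 b4 := y in
  ZZ (a0*b0 + a1*b4 + a2*b3 + a3*b2 + a4*b1)
     (a0*b1 + a1*b0 + a2*b4 + a3*b3 + a4*b2)
     (a0*b2 + a1*b1 + a2*b0 + a3*b4 + a4*b3)
     (a0*b3 + a1*b2 + a2*b1 + a3*b0 + a4*b4)
     (a0*b4 + a1*b3 + a2*b2 + a3*b1 + a4*b0).
Definition zconj (x : zz) := let: ZZ a0 a1 a2 a3 a4 := x in ZZ a0 a4 a3 a2 a1.
Definition zgal2 (x : zz) := let: ZZ a0 a1 a2 a3 a4 := x in ZZ a0 a3 a1 a4 a2.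
Definition zgal3 (x : zz) := let: ZZ a0 a1 a2 a3 a4 := x in ZZ a0 a2 a4 a1 a3.
Definition zeqb (x y : zz) :=
  let d := zadd x (zneg y) in
  [&& Z.eqb (z1 d) (z0 d), Z.eqb (z2 d) (z0 d), Z.eqb (z3 d) (z0 d) & Z.eqb (z4 d) (z0 d)].
Fixpoint smf (f : nat) (n : Z) : bool :=
  match f with
  | O => false
  | S f => if Z.eqb (Z.abs n) 1 then true else
           if Z.eqb (n mod 2) 0 then smf f (n / 2) else
           if Z.eqb (n mod 3) 0 then smf f (n / 3) else
           if Z.eqb (n mod 5) 0 then smf f (n / 5) else false
  end.
Definition zpartner (x : zz) := zmul (zgal2 x) (zmul (zgal3 x) (zconj x)).
Definition nzcheck (x : zz) :=
  let p := zmul x (zpartner x) in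
  zeqb p (zc (z0 p - z1 p)) && smf 200 (z0 p - z1 p).

Local Close Scope Z_scope.
Fixpoint padd (p q : seq zz) : seq zz :=
  match p, q with
  | [::], _ => q
  | _, [::] => p
  | c :: p', d :: q' => zadd c d :: padd p' q'
  end.
Fixpoint pmul (p q : seq zz) : seq zz :=
  match p with
  | [::] => [::]
  | c :: p' => padd (map (zmul c) q) (zc 0 :: pmul p' q)
  end.
Definition pnull (p : seq zz) := all (fun c => zeqb c (zc 0)) p.

Definition pcert (Q g F : seq zz) (c : zz) :=
  pnull (padd (pmul Q g) (map zneg (map (zmul c) F))).
Definition zmat := (zz * zz * zz * zz)%type.
Definition mmul (A B : zmat) : zmat :=
  let: (a, b, c, d) := A in let: (e, f, g, h) := B in
  (zadd (zmul a e) (zmul b g), zadd (zmul a f) (zmul b h),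
   zadd (zmul c e) (zmul d g), zadd (zmul c f) (zmul d h)).
Definition mscale (k : zz) (A : zmat) : zmat :=
  let: (a, b, c, d) := A in (zmul k a, zmul k b, zmul k c, zmul k d).
Definition meqb (A B : zmat) : bool :=
  let: (a, b, c, d) := A in let: (e, f, g, h) := B in
  [&& zeqb a e, zeqb b f, zeqb c g & zeqb d h].


Local Open Scope Z_scope.
Definition Ws : seq zmat := [:: ((ZZ (1) (0) (0) (0) (0)), (ZZ (0) (0) (0) (0) (0)), (ZZ (0) (0) (0) (0) (0)), (ZZ (1) (0) (0) (0) (0)));
 ((ZZ (0) (1) (0) (0) (0)), (ZZ (0) (0) (0) (0) (0)), (ZZ (0) (0) (0) (0) (0)), (ZZ (1) (0) (0) (0) (0)));
 ((ZZ (0) (0) (2) (2) (0)), (ZZ (2) (0) (0) (0) (0)), (ZZ (2) (0) (0) (0) (0)), (ZZ (0) (0) (-2) (-2) (0)));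
 ((ZZ (0) (0) (1) (0) (0)), (ZZ (0) (0) (0) (0) (0)), (ZZ (0) (0) (0) (0) (0)), (ZZ (1) (0) (0) (0) (0)));
 ((ZZ (-2) (-2) (-2) (0) (0)), (ZZ (2) (0) (0) (0) (0)), (ZZ (0) (2) (0) (0) (0)), (ZZ (0) (0) (-2) (-2) (0)));
 ((ZZ (-2) (-2) (-2) (0) (0)), (ZZ (0) (2) (0) (0) (0)), (ZZ (2) (0) (0) (0) (0)), (ZZ (0) (0) (-2) (-2) (0)));
 ((ZZ (0) (0) (0) (1) (0)), (ZZ (0) (0) (0) (0) (0)), (ZZ (0) (0) (0) (0) (0)), (ZZ (1) (0) (0) (0) (0)));
 ((ZZ (0) (-2) (-2) (-2) (0)), (ZZ (2) (0) (0) (0) (0)), (ZZ (0) (0) (2) (0) (0)), (ZZ (0) (0) (-2) (-2) (0)));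
 ((ZZ (0) (-2) (-2) (-2) (0)), (ZZ (0) (2) (0) (0) (0)), (ZZ (0) (2) (0) (0) (0)), (ZZ (0) (0) (-2) (-2) (0)));
 ((ZZ (0) (-2) (-2) (-2) (0)), (ZZ (0) (0) (2) (0) (0)), (ZZ (2) (0) (0) (0) (0)), (ZZ (0) (0) (-2) (-2) (0)));
 ((ZZ (8) (8) (4) (0) (0)), (ZZ (-4) (-4) (-8) (-4) (0)), (ZZ (-4) (-4) (-8) (-4) (0)), (ZZ (4) (4) (-4) (-4) (0)));
 ((ZZ (-1) (-1) (-1) (-1) (0)), (ZZ (0) (0) (0) (0) (0)), (ZZ (0) (0) (0) (0) (0)), (ZZ (1) (0) (0) (0) (0)));
 ((ZZ (2) (2) (0) (0) (0)), (ZZ (2) (0) (0) (0) (0)), (ZZ (0) (0) (0) (2) (0)), (ZZ (0) (0) (-2) (-2) (0)));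
 ((ZZ (2) (2) (0) (0) (0)), (ZZ (0) (2) (0) (0) (0)), (ZZ (0) (0) (2) (0) (0)), (ZZ (0) (0) (-2) (-2) (0)));
 ((ZZ (2) (2) (0) (0) (0)), (ZZ (0) (0) (2) (0) (0)), (ZZ (0) (2) (0) (0) (0)), (ZZ (0) (0) (-2) (-2) (0)));
 ((ZZ (0) (8) (8) (4) (0)), (ZZ (-4) (-4) (-8) (-4) (0)), (ZZ (4) (0) (0) (-4) (0)), (ZZ (4) (4) (-4) (-4) (0)));
 ((ZZ (2) (2) (0) (0) (0)), (ZZ (0) (0) (0) (2) (0)), (ZZ (2) (0) (0) (0) (0)), (ZZ (0) (0) (-2) (-2) (0)));
 ((ZZ (4) (4) (8) (4) (0)), (ZZ (0) (-4) (-8) (-8) (0)), (ZZ (0) (-4) (-8) (-8) (0)), (ZZ (4) (0) (0) (-4) (0)));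
 ((ZZ (0) (8) (8) (4) (0)), (ZZ (4) (0) (0) (-4) (0)), (ZZ (-4) (-4) (-8) (-4) (0)), (ZZ (4) (4) (-4) (-4) (0)));
 ((ZZ (0) (2) (2) (0) (0)), (ZZ (0) (2) (0) (0) (0)), (ZZ (0) (0) (0) (2) (0)), (ZZ (0) (0) (-2) (-2) (0)));
 ((ZZ (0) (2) (2) (0) (0)), (ZZ (0) (0) (2) (0) (0)), (ZZ (0) (0) (2) (0) (0)), (ZZ (0) (0) (-2) (-2) (0)));
 ((ZZ (-4) (-4) (4) (4) (0)), (ZZ (-4) (-4) (-8) (-4) (0)), (ZZ (4) (8) (4) (4) (0)), (ZZ (4) (4) (-4) (-4) (0)));
 ((ZZ (0) (2) (2) (0) (0)), (ZZ (0) (0) (0) (2) (0)), (ZZ (0) (2) (0) (0) (0)), (ZZ (0) (0) (-2) (-2) (0)));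
 ((ZZ (-4) (0) (0) (4) (0)), (ZZ (0) (-4) (-8) (-8) (0)), (ZZ (8) (8) (4) (0) (0)), (ZZ (4) (0) (0) (-4) (0)));
 ((ZZ (0) (-4) (0) (4) (0)), (ZZ (4) (4) (-4) (-4) (0)), (ZZ (4) (4) (-4) (-4) (0)), (ZZ (4) (0) (-4) (0) (0)));
 ((ZZ (-4) (0) (0) (4) (0)), (ZZ (8) (8) (4) (0) (0)), (ZZ (0) (-4) (-8) (-8) (0)), (ZZ (4) (0) (0) (-4) (0)));
 ((ZZ (-4) (-4) (4) (4) (0)), (ZZ (4) (8) (4) (4) (0)), (ZZ (-4) (-4) (-8) (-4) (0)), (ZZ (4) (4) (-4) (-4) (0)));
 ((ZZ (0) (0) (2) (2) (0)), (ZZ (0) (0) (2) (0) (0)), (ZZ (0) (0) (0) (2) (0)), (ZZ (0) (0) (-2) (-2) (0)));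
 ((ZZ (-4) (-8) (-8) (0) (0)), (ZZ (-4) (-4) (-8) (-4) (0)), (ZZ (-4) (0) (4) (0) (0)), (ZZ (4) (4) (-4) (-4) (0)));
 ((ZZ (0) (0) (2) (2) (0)), (ZZ (0) (0) (0) (2) (0)), (ZZ (0) (0) (2) (0) (0)), (ZZ (0) (0) (-2) (-2) (0)));
 ((ZZ (-4) (-8) (-4) (-4) (0)), (ZZ (0) (-4) (-8) (-8) (0)), (ZZ (0) (8) (8) (4) (0)), (ZZ (4) (0) (0) (-4) (0)));
 ((ZZ (-4) (-4) (-8) (-4) (0)), (ZZ (4) (4) (-4) (-4) (0)), (ZZ (4) (8) (8) (0) (0)), (ZZ (4) (0) (-4) (0) (0)));
 ((ZZ (-4) (-4) (-8) (-4) (0)), (ZZ (4) (8) (8) (0) (0)), (ZZ (4) (4) (-4) (-4) (0)), (ZZ (4) (0) (-4) (0) (0)));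
 ((ZZ (-4) (-8) (-4) (-4) (0)), (ZZ (0) (8) (8) (4) (0)), (ZZ (0) (-4) (-8) (-8) (0)), (ZZ (4) (0) (0) (-4) (0)));
 ((ZZ (8) (0) (-24) (-24) (0)), (ZZ (-8) (-24) (-8) (0) (0)), (ZZ (0) (-8) (-24) (-8) (0)), (ZZ (24) (24) (0) (-8) (0)));
 ((ZZ (-4) (-8) (-8) (0) (0)), (ZZ (-4) (0) (4) (0) (0)), (ZZ (-4) (-4) (-8) (-4) (0)), (ZZ (4) (4) (-4) (-4) (0)));
 ((ZZ (8) (0) (-24) (-24) (0)), (ZZ (0) (-8) (-24) (-8) (0)), (ZZ (-8) (-24) (-8) (0) (0)), (ZZ (24) (24) (0) (-8) (0)));
 ((ZZ (-2) (-2) (-2) (0) (0)), (ZZ (0) (0) (0) (2) (0)), (ZZ (0) (0) (0) (2) (0)), (ZZ (0) (0) (-2) (-2) (0)));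
 ((ZZ (4) (0) (-4) (0) (0)), (ZZ (0) (-4) (-8) (-8) (0)), (ZZ (-4) (-4) (4) (4) (0)), (ZZ (4) (0) (0) (-4) (0)));
 ((ZZ (4) (0) (0) (-4) (0)), (ZZ (4) (4) (-4) (-4) (0)), (ZZ (0) (4) (8) (8) (0)), (ZZ (4) (0) (-4) (0) (0)));
 ((ZZ (4) (0) (0) (-4) (0)), (ZZ (4) (8) (8) (0) (0)), (ZZ (4) (8) (8) (0) (0)), (ZZ (4) (0) (-4) (0) (0)));
 ((ZZ (4) (0) (0) (-4) (0)), (ZZ (0) (4) (8) (8) (0)), (ZZ (4) (4) (-4) (-4) (0)), (ZZ (4) (0) (-4) (0) (0)));
 ((ZZ (8) (24) (8) (0) (0)), (ZZ (-8) (-32) (-32) (-8) (0)), (ZZ (8) (0) (-24) (-24) (0)), (ZZ (8) (8) (0) (-16) (0)));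
 ((ZZ (4) (0) (-4) (0) (0)), (ZZ (-4) (-4) (4) (4) (0)), (ZZ (0) (-4) (-8) (-8) (0)), (ZZ (4) (0) (0) (-4) (0)));
 ((ZZ (8) (8) (0) (-16) (0)), (ZZ (0) (-24) (-32) (-24) (0)), (ZZ (0) (-24) (-32) (-24) (0)), (ZZ (8) (24) (8) (0) (0)));
 ((ZZ (8) (24) (8) (0) (0)), (ZZ (8) (0) (-24) (-24) (0)), (ZZ (-8) (-32) (-32) (-8) (0)), (ZZ (8) (8) (0) (-16) (0)));
 ((ZZ (4) (8) (4) (4) (0)), (ZZ (4) (4) (-4) (-4) (0)), (ZZ (-8) (-8) (-4) (0) (0)), (ZZ (4) (0) (-4) (0) (0)));
 ((ZZ (4) (8) (4) (4) (0)), (ZZ (4) (8) (8) (0) (0)), (ZZ (0) (4) (8) (8) (0)), (ZZ (4) (0) (-4) (0) (0)));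
 ((ZZ (4) (8) (4) (4) (0)), (ZZ (0) (4) (8) (8) (0)), (ZZ (4) (8) (8) (0) (0)), (ZZ (4) (0) (-4) (0) (0)));
 ((ZZ (0) (8) (24) (8) (0)), (ZZ (-8) (-32) (-32) (-8) (0)), (ZZ (24) (32) (24) (0) (0)), (ZZ (8) (8) (0) (-16) (0)));
 ((ZZ (0) (0) (0) (0) (0)), (ZZ (16) (-8) (-32) (-16) (0)), (ZZ (24) (8) (-8) (-24) (0)), (ZZ (0) (0) (0) (0) (0)));
 ((ZZ (0) (0) (0) (0) (0)), (ZZ (24) (8) (-8) (-24) (0)), (ZZ (16) (-8) (-32) (-16) (0)), (ZZ (0) (0) (0) (0) (0)));
 ((ZZ (-4) (0) (4) (0) (0)), (ZZ (4) (8) (8) (0) (0)), (ZZ (-8) (-8) (-4) (0) (0)), (ZZ (4) (0) (-4) (0) (0)));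
 ((ZZ (-4) (0) (4) (0) (0)), (ZZ (0) (4) (8) (8) (0)), (ZZ (0) (4) (8) (8) (0)), (ZZ (4) (0) (-4) (0) (0)));
 ((ZZ (-8) (-8) (0) (16) (0)), (ZZ (-8) (-32) (-32) (-8) (0)), (ZZ (0) (24) (32) (24) (0)), (ZZ (8) (8) (0) (-16) (0)));
 ((ZZ (0) (0) (0) (0) (0)), (ZZ (16) (-8) (-32) (-16) (0)), (ZZ (24) (48) (32) (16) (0)), (ZZ (0) (0) (0) (0) (0)));
 ((ZZ (0) (0) (0) (0) (0)), (ZZ (24) (48) (32) (16) (0)), (ZZ (16) (-8) (-32) (-16) (0)), (ZZ (0) (0) (0) (0) (0)));
 ((ZZ (0) (-4) (0) (4) (0)), (ZZ (0) (4) (8) (8) (0)), (ZZ (-8) (-8) (-4) (0) (0)), (ZZ (4) (0) (-4) (0) (0)));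
 ((ZZ (-16) (-24) (-24) (-16) (0)), (ZZ (-8) (-32) (-32) (-8) (0)), (ZZ (-24) (-24) (0) (8) (0)), (ZZ (8) (8) (0) (-16) (0)));
 ((ZZ (0) (0) (0) (0) (0)), (ZZ (16) (-8) (-32) (-16) (0)), (ZZ (-16) (8) (32) (16) (0)), (ZZ (0) (0) (0) (0) (0)))].

Definition Tab : seq ((nat * zz * zz) * (nat * zz * zz)) := [:: ((1%nat, (ZZ (1) (0) (0) (0) (0)), (ZZ (1) (0) (0) (0) (0))), (2%nat, (ZZ (1) (0) (0) (0) (0)), (ZZ (1) (0) (0) (0) (0))));
 ((3%nat, (ZZ (1) (0) (0) (0) (0)), (ZZ (1) (0) (0) (0) (0))), (4%nat, (ZZ (1) (0) (0) (0) (0)), (ZZ (1) (0) (0) (0) (0))));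
 ((5%nat, (ZZ (1) (0) (0) (0) (0)), (ZZ (1) (0) (0) (0) (0))), (0%nat, (ZZ (1) (0) (0) (0) (0)), (ZZ (8) (0) (-4) (-4) (0))));
 ((6%nat, (ZZ (1) (0) (0) (0) (0)), (ZZ (1) (0) (0) (0) (0))), (7%nat, (ZZ (1) (0) (0) (0) (0)), (ZZ (1) (0) (0) (0) (0))));
 ((8%nat, (ZZ (1) (0) (0) (0) (0)), (ZZ (1) (0) (0) (0) (0))), (1%nat, (ZZ (1) (0) (0) (0) (0)), (ZZ (8) (0) (-4) (-4) (0))));
 ((9%nat, (ZZ (1) (0) (0) (0) (0)), (ZZ (1) (0) (0) (0) (0))), (10%nat, (ZZ (1) (0) (0) (0) (0)), (ZZ (1) (0) (0) (0) (0))));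
 ((11%nat, (ZZ (1) (0) (0) (0) (0)), (ZZ (1) (0) (0) (0) (0))), (12%nat, (ZZ (1) (0) (0) (0) (0)), (ZZ (1) (0) (0) (0) (0))));
 ((13%nat, (ZZ (1) (0) (0) (0) (0)), (ZZ (1) (0) (0) (0) (0))), (3%nat, (ZZ (1) (0) (0) (0) (0)), (ZZ (8) (0) (-4) (-4) (0))));
 ((14%nat, (ZZ (1) (0) (0) (0) (0)), (ZZ (1) (0) (0) (0) (0))), (15%nat, (ZZ (1) (0) (0) (0) (0)), (ZZ (1) (0) (0) (0) (0))));
 ((16%nat, (ZZ (1) (0) (0) (0) (0)), (ZZ (1) (0) (0) (0) (0))), (17%nat, (ZZ (1) (0) (0) (0) (0)), (ZZ (1) (0) (0) (0) (0))));
 ((18%nat, (ZZ (1) (0) (0) (0) (0)), (ZZ (1) (0) (0) (0) (0))), (5%nat, (ZZ (1) (0) (0) (0) (0)), (ZZ (8) (0) (-4) (-4) (0))));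
 ((0%nat, (ZZ (1) (0) (0) (0) (0)), (ZZ (1) (0) (0) (0) (0))), (18%nat, (ZZ (10) (0) (0) (0) (0)), (ZZ (3) (1) (-1) (2) (0))));
 ((19%nat, (ZZ (1) (0) (0) (0) (0)), (ZZ (1) (0) (0) (0) (0))), (6%nat, (ZZ (1) (0) (0) (0) (0)), (ZZ (8) (0) (-4) (-4) (0))));
 ((20%nat, (ZZ (1) (0) (0) (0) (0)), (ZZ (1) (0) (0) (0) (0))), (21%nat, (ZZ (1) (0) (0) (0) (0)), (ZZ (1) (0) (0) (0) (0))));
 ((22%nat, (ZZ (1) (0) (0) (0) (0)), (ZZ (1) (0) (0) (0) (0))), (23%nat, (ZZ (1) (0) (0) (0) (0)), (ZZ (1) (0) (0) (0) (0))));
 ((2%nat, (ZZ (1) (0) (0) (0) (0)), (ZZ (2) (0) (0) (-2) (0))), (8%nat, (ZZ (1) (0) (0) (0) (0)), (ZZ (8) (0) (-4) (-4) (0))));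
 ((15%nat, (ZZ (10) (0) (0) (0) (0)), (ZZ (3) (1) (-1) (2) (0))), (24%nat, (ZZ (1) (0) (0) (0) (0)), (ZZ (1) (0) (0) (0) (0))));
 ((25%nat, (ZZ (1) (0) (0) (0) (0)), (ZZ (1) (0) (0) (0) (0))), (9%nat, (ZZ (1) (0) (0) (0) (0)), (ZZ (8) (0) (-4) (-4) (0))));
 ((26%nat, (ZZ (1) (0) (0) (0) (0)), (ZZ (1) (0) (0) (0) (0))), (11%nat, (ZZ (1) (0) (0) (0) (0)), (ZZ (24) (8) (-8) (-24) (0))));
 ((27%nat, (ZZ (1) (0) (0) (0) (0)), (ZZ (1) (0) (0) (0) (0))), (28%nat, (ZZ (1) (0) (0) (0) (0)), (ZZ (1) (0) (0) (0) (0))));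
 ((29%nat, (ZZ (1) (0) (0) (0) (0)), (ZZ (1) (0) (0) (0) (0))), (30%nat, (ZZ (1) (0) (0) (0) (0)), (ZZ (1) (0) (0) (0) (0))));
 ((4%nat, (ZZ (1) (0) (0) (0) (0)), (ZZ (2) (0) (0) (-2) (0))), (13%nat, (ZZ (1) (0) (0) (0) (0)), (ZZ (8) (0) (-4) (-4) (0))));
 ((21%nat, (ZZ (10) (0) (0) (0) (0)), (ZZ (3) (1) (-1) (2) (0))), (31%nat, (ZZ (1) (0) (0) (0) (0)), (ZZ (1) (0) (0) (0) (0))));
 ((24%nat, (ZZ (1) (0) (0) (0) (0)), (ZZ (0) (0) (0) (-1) (0))), (14%nat, (ZZ (1) (0) (0) (0) (0)), (ZZ (8) (0) (-4) (-4) (0))));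
 ((32%nat, (ZZ (1) (0) (0) (0) (0)), (ZZ (1) (0) (0) (0) (0))), (16%nat, (ZZ (1) (0) (0) (0) (0)), (ZZ (8) (0) (-4) (-4) (0))));
 ((33%nat, (ZZ (1) (0) (0) (0) (0)), (ZZ (1) (0) (0) (0) (0))), (34%nat, (ZZ (1) (0) (0) (0) (0)), (ZZ (1) (0) (0) (0) (0))));
 ((35%nat, (ZZ (1) (0) (0) (0) (0)), (ZZ (1) (0) (0) (0) (0))), (36%nat, (ZZ (1) (0) (0) (0) (0)), (ZZ (1) (0) (0) (0) (0))));
 ((37%nat, (ZZ (1) (0) (0) (0) (0)), (ZZ (1) (0) (0) (0) (0))), (38%nat, (ZZ (1) (0) (0) (0) (0)), (ZZ (1) (0) (0) (0) (0))));
 ((7%nat, (ZZ (1) (0) (0) (0) (0)), (ZZ (2) (0) (0) (-2) (0))), (19%nat, (ZZ (1) (0) (0) (0) (0)), (ZZ (8) (0) (-4) (-4) (0))));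
 ((28%nat, (ZZ (10) (0) (0) (0) (0)), (ZZ (3) (1) (-1) (2) (0))), (39%nat, (ZZ (1) (0) (0) (0) (0)), (ZZ (1) (0) (0) (0) (0))));
 ((31%nat, (ZZ (1) (0) (0) (0) (0)), (ZZ (0) (0) (0) (-1) (0))), (20%nat, (ZZ (1) (0) (0) (0) (0)), (ZZ (8) (0) (-4) (-4) (0))));
 ((40%nat, (ZZ (1) (0) (0) (0) (0)), (ZZ (1) (0) (0) (0) (0))), (22%nat, (ZZ (1) (0) (0) (0) (0)), (ZZ (8) (0) (-4) (-4) (0))));
 ((41%nat, (ZZ (1) (0) (0) (0) (0)), (ZZ (1) (0) (0) (0) (0))), (42%nat, (ZZ (1) (0) (0) (0) (0)), (ZZ (1) (0) (0) (0) (0))));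
 ((43%nat, (ZZ (1) (0) (0) (0) (0)), (ZZ (1) (0) (0) (0) (0))), (44%nat, (ZZ (1) (0) (0) (0) (0)), (ZZ (1) (0) (0) (0) (0))));
 ((10%nat, (ZZ (1) (0) (0) (0) (0)), (ZZ (2) (0) (0) (-2) (0))), (25%nat, (ZZ (1) (0) (0) (0) (0)), (ZZ (8) (0) (-4) (-4) (0))));
 ((34%nat, (ZZ (10) (0) (0) (0) (0)), (ZZ (3) (1) (-1) (2) (0))), (45%nat, (ZZ (1) (0) (0) (0) (0)), (ZZ (1) (0) (0) (0) (0))));
 ((12%nat, (ZZ (1) (0) (0) (0) (0)), (ZZ (4) (4) (0) (-8) (0))), (26%nat, (ZZ (1) (0) (0) (0) (0)), (ZZ (8) (0) (-4) (-4) (0))));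
 ((36%nat, (ZZ (20) (0) (0) (0) (0)), (ZZ (0) (1) (-2) (1) (0))), (46%nat, (ZZ (1) (0) (0) (0) (0)), (ZZ (1) (0) (0) (0) (0))));
 ((39%nat, (ZZ (1) (0) (0) (0) (0)), (ZZ (0) (0) (0) (-1) (0))), (27%nat, (ZZ (1) (0) (0) (0) (0)), (ZZ (8) (0) (-4) (-4) (0))));
 ((47%nat, (ZZ (1) (0) (0) (0) (0)), (ZZ (1) (0) (0) (0) (0))), (29%nat, (ZZ (1) (0) (0) (0) (0)), (ZZ (8) (0) (-4) (-4) (0))));
 ((48%nat, (ZZ (1) (0) (0) (0) (0)), (ZZ (1) (0) (0) (0) (0))), (49%nat, (ZZ (1) (0) (0) (0) (0)), (ZZ (1) (0) (0) (0) (0))));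
 ((49%nat, (ZZ (10) (0) (0) (0) (0)), (ZZ (-3) (-1) (-4) (-2) (0))), (50%nat, (ZZ (1) (0) (0) (0) (0)), (ZZ (1) (0) (0) (0) (0))));
 ((17%nat, (ZZ (1) (0) (0) (0) (0)), (ZZ (2) (0) (0) (-2) (0))), (32%nat, (ZZ (1) (0) (0) (0) (0)), (ZZ (8) (0) (-4) (-4) (0))));
 ((42%nat, (ZZ (10) (0) (0) (0) (0)), (ZZ (3) (1) (-1) (2) (0))), (51%nat, (ZZ (1) (0) (0) (0) (0)), (ZZ (1) (0) (0) (0) (0))));
 ((45%nat, (ZZ (1) (0) (0) (0) (0)), (ZZ (0) (0) (0) (-1) (0))), (33%nat, (ZZ (1) (0) (0) (0) (0)), (ZZ (8) (0) (-4) (-4) (0))));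
 ((46%nat, (ZZ (1) (0) (0) (0) (0)), (ZZ (0) (2) (0) (-2) (0))), (35%nat, (ZZ (1) (0) (0) (0) (0)), (ZZ (8) (0) (-4) (-4) (0))));
 ((52%nat, (ZZ (1) (0) (0) (0) (0)), (ZZ (1) (0) (0) (0) (0))), (37%nat, (ZZ (1) (0) (0) (0) (0)), (ZZ (8) (0) (-4) (-4) (0))));
 ((53%nat, (ZZ (1) (0) (0) (0) (0)), (ZZ (1) (0) (0) (0) (0))), (54%nat, (ZZ (1) (0) (0) (0) (0)), (ZZ (1) (0) (0) (0) (0))));
 ((54%nat, (ZZ (10) (0) (0) (0) (0)), (ZZ (-3) (-1) (-4) (-2) (0))), (55%nat, (ZZ (1) (0) (0) (0) (0)), (ZZ (1) (0) (0) (0) (0))));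
 ((23%nat, (ZZ (1) (0) (0) (0) (0)), (ZZ (2) (0) (0) (-2) (0))), (40%nat, (ZZ (1) (0) (0) (0) (0)), (ZZ (8) (0) (-4) (-4) (0))));
 ((51%nat, (ZZ (1) (0) (0) (0) (0)), (ZZ (0) (0) (0) (-1) (0))), (41%nat, (ZZ (1) (0) (0) (0) (0)), (ZZ (8) (0) (-4) (-4) (0))));
 ((56%nat, (ZZ (1) (0) (0) (0) (0)), (ZZ (1) (0) (0) (0) (0))), (43%nat, (ZZ (1) (0) (0) (0) (0)), (ZZ (8) (0) (-4) (-4) (0))));
 ((57%nat, (ZZ (1) (0) (0) (0) (0)), (ZZ (1) (0) (0) (0) (0))), (58%nat, (ZZ (1) (0) (0) (0) (0)), (ZZ (1) (0) (0) (0) (0))));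
 ((58%nat, (ZZ (10) (0) (0) (0) (0)), (ZZ (-3) (-1) (-4) (-2) (0))), (59%nat, (ZZ (1) (0) (0) (0) (0)), (ZZ (1) (0) (0) (0) (0))));
 ((30%nat, (ZZ (1) (0) (0) (0) (0)), (ZZ (2) (0) (0) (-2) (0))), (47%nat, (ZZ (1) (0) (0) (0) (0)), (ZZ (8) (0) (-4) (-4) (0))));
 ((50%nat, (ZZ (1) (0) (0) (0) (0)), (ZZ (0) (1) (0) (0) (0))), (48%nat, (ZZ (1) (0) (0) (0) (0)), (ZZ (8) (0) (-4) (-4) (0))));
 ((59%nat, (ZZ (1) (0) (0) (0) (0)), (ZZ (-1) (0) (0) (0) (0))), (57%nat, (ZZ (1) (0) (0) (0) (0)), (ZZ (8) (12) (12) (8) (0))));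
 ((44%nat, (ZZ (10) (0) (0) (0) (0)), (ZZ (-2) (-4) (-1) (-3) (0))), (56%nat, (ZZ (1) (0) (0) (0) (0)), (ZZ (0) (-1) (0) (0) (0))));
 ((38%nat, (ZZ (1) (0) (0) (0) (0)), (ZZ (2) (0) (0) (-2) (0))), (52%nat, (ZZ (1) (0) (0) (0) (0)), (ZZ (8) (0) (-4) (-4) (0))));
 ((55%nat, (ZZ (1) (0) (0) (0) (0)), (ZZ (0) (1) (0) (0) (0))), (53%nat, (ZZ (1) (0) (0) (0) (0)), (ZZ (8) (0) (-4) (-4) (0))))].

Definition Hl : seq (nat * nat * zz * zz) := [:: (0%nat, 0%nat, (ZZ (1) (0) (0) (0) (0)), (ZZ (1) (0) (0) (0) (0))); (2%nat, 1%nat, (ZZ (1) (0) (0) (0) (0)), (ZZ (1) (0) (0) (0) (0))); (59%nat, 2%nat, (ZZ (40) (0) (0) (0) (0)), (ZZ (-1) (1) (-1) (1) (0))); (53%nat, 3%nat, (ZZ (10) (0) (0) (0) (0)), (ZZ (-2) (1) (-1) (2) (0)))].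

Definition Certs : seq (nat * seq zz * zz * seq zz * zz) := [:: (0%nat, [::], zc 1, [::], zc 1);
 (0%nat, [:: (ZZ (2) (4) (1) (3) (0)); (ZZ (0) (0) (0) (0) (0)); (ZZ (0) (0) (0) (0) (0)); (ZZ (0) (0) (0) (0) (0)); (ZZ (0) (0) (0) (0) (0)); (ZZ (-22) (-44) (-11) (-33) (0)); (ZZ (0) (0) (0) (0) (0)); (ZZ (0) (0) (0) (0) (0)); (ZZ (0) (0) (0) (0) (0)); (ZZ (0) (0) (0) (0) (0)); (ZZ (-2) (-4) (-1) (-3) (0))], zc 5, [:: (ZZ (0) (0) (0) (0) (0)); (ZZ (-1) (0) (0) (0) (0)); (ZZ (0) (0) (0) (0) (0)); (ZZ (0) (0) (0) (0) (0)); (ZZ (0) (0) (0) (0) (0)); (ZZ (0) (0) (0) (0) (0)); (ZZ (11) (0) (0) (0) (0)); (ZZ (0) (0) (0) (0) (0)); (ZZ (0) (0) (0) (0) (0)); (ZZ (0) (0) (0) (0) (0)); (ZZ (0) (0) (0) (0) (0)); (ZZ (1) (0) (0) (0) (0))], zc 1);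
 (0%nat, [::], zc 1, [::], zc 1);
 (0%nat, [:: (ZZ (1) (2) (3) (-1) (0)); (ZZ (0) (0) (0) (0) (0)); (ZZ (0) (0) (0) (0) (0)); (ZZ (0) (0) (0) (0) (0)); (ZZ (0) (0) (0) (0) (0)); (ZZ (-11) (-22) (-33) (11) (0)); (ZZ (0) (0) (0) (0) (0)); (ZZ (0) (0) (0) (0) (0)); (ZZ (0) (0) (0) (0) (0)); (ZZ (0) (0) (0) (0) (0)); (ZZ (-1) (-2) (-3) (1) (0))], zc 5, [:: (ZZ (0) (0) (0) (0) (0)); (ZZ (-1) (0) (0) (0) (0)); (ZZ (0) (0) (0) (0) (0)); (ZZ (0) (0) (0) (0) (0)); (ZZ (0) (0) (0) (0) (0)); (ZZ (0) (0) (0) (0) (0)); (ZZ (11) (0) (0) (0) (0)); (ZZ (0) (0) (0) (0) (0)); (ZZ (0) (0) (0) (0) (0)); (ZZ (0) (0) (0) (0) (0)); (ZZ (0) (0) (0) (0) (0)); (ZZ (1) (0) (0) (0) (0))], zc 1);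
 (0%nat, [:: (ZZ (-1) (-2) (0) (-2) (0)); (ZZ (0) (0) (0) (0) (0)); (ZZ (0) (0) (0) (0) (0)); (ZZ (0) (0) (0) (0) (0)); (ZZ (0) (0) (0) (0) (0)); (ZZ (11) (22) (0) (22) (0)); (ZZ (0) (0) (0) (0) (0)); (ZZ (0) (0) (0) (0) (0)); (ZZ (0) (0) (0) (0) (0)); (ZZ (0) (0) (0) (0) (0)); (ZZ (1) (2) (0) (2) (0))], zc 20, [:: (ZZ (0) (0) (0) (0) (0)); (ZZ (1) (0) (1) (1) (0)); (ZZ (-1) (1) (-1) (0) (0)); (ZZ (0) (-2) (1) (-2) (0)); (ZZ (3) (3) (0) (5) (0)); (ZZ (-8) (-3) (-3) (-8) (0)); (ZZ (2) (0) (-3) (-3) (0)); (ZZ (-2) (-3) (-2) (0) (0)); (ZZ (0) (1) (2) (1) (0)); (ZZ (1) (1) (0) (0) (0)); (ZZ (-1) (-1) (-1) (-1) (0))], zc 2);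
 (0%nat, [:: (ZZ (0) (0) (0) (0) (0)); (ZZ (-1) (-2) (2) (-4) (0)); (ZZ (-1) (-2) (2) (-4) (0)); (ZZ (-2) (-4) (4) (-8) (0)); (ZZ (-3) (-6) (6) (-12) (0)); (ZZ (-5) (-10) (10) (-20) (0)); (ZZ (3) (6) (-6) (12) (0)); (ZZ (-2) (-4) (4) (-8) (0)); (ZZ (1) (2) (-2) (4) (0)); (ZZ (-1) (-2) (2) (-4) (0))], zc 20, [:: (ZZ (0) (0) (0) (0) (0)); (ZZ (1) (0) (1) (1) (0)); (ZZ (2) (0) (1) (1) (0)); (ZZ (3) (0) (2) (2) (0)); (ZZ (5) (0) (3) (3) (0)); (ZZ (8) (0) (5) (5) (0)); (ZZ (2) (0) (-3) (-3) (0)); (ZZ (-1) (0) (2) (2) (0)); (ZZ (1) (0) (-1) (-1) (0)); (ZZ (0) (0) (1) (1) (0)); (ZZ (1) (0) (0) (0) (0))], zc 2);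
 (0%nat, [:: (ZZ (-1) (-2) (-3) (1) (0)); (ZZ (0) (0) (0) (0) (0)); (ZZ (0) (0) (0) (0) (0)); (ZZ (0) (0) (0) (0) (0)); (ZZ (0) (0) (0) (0) (0)); (ZZ (11) (22) (33) (-11) (0)); (ZZ (0) (0) (0) (0) (0)); (ZZ (0) (0) (0) (0) (0)); (ZZ (0) (0) (0) (0) (0)); (ZZ (0) (0) (0) (0) (0)); (ZZ (1) (2) (3) (-1) (0))], zc 5, [:: (ZZ (0) (0) (0) (0) (0)); (ZZ (-1) (0) (0) (0) (0)); (ZZ (0) (0) (0) (0) (0)); (ZZ (0) (0) (0) (0) (0)); (ZZ (0) (0) (0) (0) (0)); (ZZ (0) (0) (0) (0) (0)); (ZZ (11) (0) (0) (0) (0)); (ZZ (0) (0) (0) (0) (0)); (ZZ (0) (0) (0) (0) (0)); (ZZ (0) (0) (0) (0) (0)); (ZZ (0) (0) (0) (0) (0)); (ZZ (1) (0) (0) (0) (0))], zc 1);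
 (0%nat, [:: (ZZ (0) (0) (-1) (1) (0)); (ZZ (0) (0) (0) (0) (0)); (ZZ (0) (0) (0) (0) (0)); (ZZ (0) (0) (0) (0) (0)); (ZZ (0) (0) (0) (0) (0)); (ZZ (0) (0) (11) (-11) (0)); (ZZ (0) (0) (0) (0) (0)); (ZZ (0) (0) (0) (0) (0)); (ZZ (0) (0) (0) (0) (0)); (ZZ (0) (0) (0) (0) (0)); (ZZ (0) (0) (1) (-1) (0))], zc 20, [:: (ZZ (0) (0) (0) (0) (0)); (ZZ (1) (0) (1) (1) (0)); (ZZ (0) (-1) (1) (-1) (0)); (ZZ (-3) (-1) (-1) (-3) (0)); (ZZ (-3) (2) (-3) (0) (0)); (ZZ (5) (5) (0) (8) (0)); (ZZ (2) (0) (-3) (-3) (0)); (ZZ (0) (-2) (-3) (-2) (0)); (ZZ (-1) (-2) (-2) (-1) (0)); (ZZ (-1) (-1) (-1) (0) (0)); (ZZ (0) (0) (0) (1) (0))], zc 2);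
 (0%nat, [:: (ZZ (0) (0) (0) (0) (0)); (ZZ (-1) (-2) (2) (-4) (0)); (ZZ (-1) (-2) (2) (-4) (0)); (ZZ (-2) (-4) (4) (-8) (0)); (ZZ (-3) (-6) (6) (-12) (0)); (ZZ (-5) (-10) (10) (-20) (0)); (ZZ (3) (6) (-6) (12) (0)); (ZZ (-2) (-4) (4) (-8) (0)); (ZZ (1) (2) (-2) (4) (0)); (ZZ (-1) (-2) (2) (-4) (0))], zc 20, [:: (ZZ (0) (0) (0) (0) (0)); (ZZ (1) (0) (1) (1) (0)); (ZZ (-1) (1) (-1) (0) (0)); (ZZ (0) (-2) (1) (-2) (0)); (ZZ (3) (3) (0) (5) (0)); (ZZ (-8) (-3) (-3) (-8) (0)); (ZZ (2) (0) (-3) (-3) (0)); (ZZ (-2) (-3) (-2) (0) (0)); (ZZ (0) (1) (2) (1) (0)); (ZZ (1) (1) (0) (0) (0)); (ZZ (-1) (-1) (-1) (-1) (0))], zc 2);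
 (0%nat, [:: (ZZ (0) (0) (0) (0) (0)); (ZZ (2) (4) (1) (3) (0)); (ZZ (2) (4) (1) (3) (0)); (ZZ (4) (8) (2) (6) (0)); (ZZ (6) (12) (3) (9) (0)); (ZZ (10) (20) (5) (15) (0)); (ZZ (-6) (-12) (-3) (-9) (0)); (ZZ (4) (8) (2) (6) (0)); (ZZ (-2) (-4) (-1) (-3) (0)); (ZZ (2) (4) (1) (3) (0))], zc 20, [:: (ZZ (0) (0) (0) (0) (0)); (ZZ (1) (0) (1) (1) (0)); (ZZ (2) (0) (1) (1) (0)); (ZZ (3) (0) (2) (2) (0)); (ZZ (5) (0) (3) (3) (0)); (ZZ (8) (0) (5) (5) (0)); (ZZ (2) (0) (-3) (-3) (0)); (ZZ (-1) (0) (2) (2) (0)); (ZZ (1) (0) (-1) (-1) (0)); (ZZ (0) (0) (1) (1) (0)); (ZZ (1) (0) (0) (0) (0))], zc 2);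
 (0%nat, [:: (ZZ (0) (0) (0) (0) (0)); (ZZ (1) (2) (-1) (3) (0)); (ZZ (1) (2) (-1) (3) (0)); (ZZ (2) (4) (-2) (6) (0)); (ZZ (3) (6) (-3) (9) (0)); (ZZ (5) (10) (-5) (15) (0)); (ZZ (-3) (-6) (3) (-9) (0)); (ZZ (2) (4) (-2) (6) (0)); (ZZ (-1) (-2) (1) (-3) (0)); (ZZ (1) (2) (-1) (3) (0))], zc 80, [:: (ZZ (0) (0) (0) (0) (0)); (ZZ (4) (3) (2) (6) (0)); (ZZ (-3) (-6) (1) (-7) (0)); (ZZ (-4) (7) (-7) (4) (0)); (ZZ (18) (-4) (14) (7) (0)); (ZZ (-36) (-7) (-18) (-29) (0)); (ZZ (3) (-4) (-11) (-8) (0)); (ZZ (4) (8) (7) (1) (0)); (ZZ (-3) (-1) (1) (3) (0)); (ZZ (1) (-3) (-2) (-1) (0)); (ZZ (-2) (1) (-1) (-3) (0))], zc 20);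
 (0%nat, [:: (ZZ (-2) (-4) (-1) (-3) (0)); (ZZ (0) (0) (0) (0) (0)); (ZZ (0) (0) (0) (0) (0)); (ZZ (0) (0) (0) (0) (0)); (ZZ (0) (0) (0) (0) (0)); (ZZ (22) (44) (11) (33) (0)); (ZZ (0) (0) (0) (0) (0)); (ZZ (0) (0) (0) (0) (0)); (ZZ (0) (0) (0) (0) (0)); (ZZ (0) (0) (0) (0) (0)); (ZZ (2) (4) (1) (3) (0))], zc 5, [:: (ZZ (0) (0) (0) (0) (0)); (ZZ (-1) (0) (0) (0) (0)); (ZZ (0) (0) (0) (0) (0)); (ZZ (0) (0) (0) (0) (0)); (ZZ (0) (0) (0) (0) (0)); (ZZ (0) (0) (0) (0) (0)); (ZZ (11) (0) (0) (0) (0)); (ZZ (0) (0) (0) (0) (0)); (ZZ (0) (0) (0) (0) (0)); (ZZ (0) (0) (0) (0) (0)); (ZZ (0) (0) (0) (0) (0)); (ZZ (1) (0) (0) (0) (0))], zc 1);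
 (0%nat, [:: (ZZ (0) (0) (1) (-1) (0)); (ZZ (0) (0) (0) (0) (0)); (ZZ (0) (0) (0) (0) (0)); (ZZ (0) (0) (0) (0) (0)); (ZZ (0) (0) (0) (0) (0)); (ZZ (0) (0) (-11) (11) (0)); (ZZ (0) (0) (0) (0) (0)); (ZZ (0) (0) (0) (0) (0)); (ZZ (0) (0) (0) (0) (0)); (ZZ (0) (0) (0) (0) (0)); (ZZ (0) (0) (-1) (1) (0))], zc 20, [:: (ZZ (0) (0) (0) (0) (0)); (ZZ (1) (0) (1) (1) (0)); (ZZ (1) (1) (0) (2) (0)); (ZZ (-2) (1) (-2) (0) (0)); (ZZ (-5) (-2) (-2) (-5) (0)); (ZZ (0) (-5) (3) (-5) (0)); (ZZ (2) (0) (-3) (-3) (0)); (ZZ (2) (2) (0) (-1) (0)); (ZZ (1) (2) (1) (0) (0)); (ZZ (0) (1) (1) (0) (0)); (ZZ (0) (0) (1) (0) (0))], zc 2);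
 (1%nat, [:: (ZZ (1) (2) (-2) (4) (0)); (ZZ (-4) (-8) (3) (-11) (0)); (ZZ (12) (24) (-9) (33) (0)); (ZZ (-37) (-74) (24) (-98) (0)); (ZZ (110) (220) (-70) (290) (0)); (ZZ (-99) (-198) (-252) (54) (0)); (ZZ (56) (112) (83) (29) (0)); (ZZ (-128) (-256) (-279) (23) (0)); (ZZ (33) (66) (234) (-168) (0)); (ZZ (40) (80) (-480) (560) (0)); (ZZ (-33) (-66) (-234) (168) (0)); (ZZ (-128) (-256) (-279) (23) (0)); (ZZ (-56) (-112) (-83) (-29) (0)); (ZZ (-99) (-198) (-252) (54) (0)); (ZZ (-110) (-220) (70) (-290) (0)); (ZZ (-37) (-74) (24) (-98) (0)); (ZZ (-12) (-24) (9) (-33) (0)); (ZZ (-4) (-8) (3) (-11) (0)); (ZZ (-1) (-2) (2) (-4) (0))], zc 20, [:: (ZZ (0) (0) (0) (0) (0)); (ZZ (1) (0) (1) (1) (0)); (ZZ (0) (-1) (1) (-1) (0)); (ZZ (-3) (-1) (-1) (-3) (0)); (ZZ (-3) (2) (-3) (0) (0)); (ZZ (5) (5) (0) (8) (0)); (ZZ (2) (0) (-3) (-3) (0)); (ZZ (0) (-2) (-3) (-2) (0)); (ZZ (-1) (-2) (-2) (-1) (0)); (ZZ (-1) (-1) (-1) (0) (0)); (ZZ (0) (0) (0) (1) (0))], zc 2);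
 (1%nat, [:: (ZZ (-2) (-4) (-1) (-3) (0)); (ZZ (3) (6) (4) (2) (0)); (ZZ (-9) (-18) (-12) (-6) (0)); (ZZ (24) (48) (37) (11) (0)); (ZZ (-70) (-140) (-110) (-30) (0)); (ZZ (-252) (-504) (99) (-603) (0)); (ZZ (83) (166) (-56) (222) (0)); (ZZ (-279) (-558) (128) (-686) (0)); (ZZ (234) (468) (-33) (501) (0)); (ZZ (-480) (-960) (-40) (-920) (0)); (ZZ (-234) (-468) (33) (-501) (0)); (ZZ (-279) (-558) (128) (-686) (0)); (ZZ (-83) (-166) (56) (-222) (0)); (ZZ (-252) (-504) (99) (-603) (0)); (ZZ (70) (140) (110) (30) (0)); (ZZ (24) (48) (37) (11) (0)); (ZZ (9) (18) (12) (6) (0)); (ZZ (3) (6) (4) (2) (0)); (ZZ (2) (4) (1) (3) (0))], zc 20, [:: (ZZ (0) (0) (0) (0) (0)); (ZZ (1) (0) (1) (1) (0)); (ZZ (-1) (1) (-1) (0) (0)); (ZZ (0) (-2) (1) (-2) (0)); (ZZ (3) (3) (0) (5) (0)); (ZZ (-8) (-3) (-3) (-8) (0)); (ZZ (2) (0) (-3) (-3) (0)); (ZZ (-2) (-3) (-2) (0) (0)); (ZZ (0) (1) (2) (1) (0)); (ZZ (1) (1) (0) (0) (0)); (ZZ (-1) (-1) (-1) (-1) (0))], zc 2);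
 (0%nat, [:: (ZZ (0) (0) (0) (0) (0)); (ZZ (1) (2) (-1) (3) (0)); (ZZ (1) (2) (-1) (3) (0)); (ZZ (2) (4) (-2) (6) (0)); (ZZ (3) (6) (-3) (9) (0)); (ZZ (5) (10) (-5) (15) (0)); (ZZ (-3) (-6) (3) (-9) (0)); (ZZ (2) (4) (-2) (6) (0)); (ZZ (-1) (-2) (1) (-3) (0)); (ZZ (1) (2) (-1) (3) (0))], zc 80, [:: (ZZ (0) (0) (0) (0) (0)); (ZZ (4) (3) (2) (6) (0)); (ZZ (7) (4) (1) (8) (0)); (ZZ (11) (7) (3) (14) (0)); (ZZ (18) (11) (4) (22) (0)); (ZZ (29) (18) (7) (36) (0)); (ZZ (3) (-4) (-11) (-8) (0)); (ZZ (-1) (3) (7) (6) (0)); (ZZ (2) (-1) (-4) (-2) (0)); (ZZ (1) (2) (3) (4) (0)); (ZZ (3) (1) (-1) (2) (0))], zc 20);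
 (0%nat, [:: (ZZ (0) (0) (0) (0) (0)); (ZZ (-2) (-4) (-1) (-3) (0)); (ZZ (-2) (-4) (-1) (-3) (0)); (ZZ (-4) (-8) (-2) (-6) (0)); (ZZ (-6) (-12) (-3) (-9) (0)); (ZZ (-10) (-20) (-5) (-15) (0)); (ZZ (6) (12) (3) (9) (0)); (ZZ (-4) (-8) (-2) (-6) (0)); (ZZ (2) (4) (1) (3) (0)); (ZZ (-2) (-4) (-1) (-3) (0))], zc 20, [:: (ZZ (0) (0) (0) (0) (0)); (ZZ (1) (0) (1) (1) (0)); (ZZ (2) (0) (1) (1) (0)); (ZZ (3) (0) (2) (2) (0)); (ZZ (5) (0) (3) (3) (0)); (ZZ (8) (0) (5) (5) (0)); (ZZ (2) (0) (-3) (-3) (0)); (ZZ (-1) (0) (2) (2) (0)); (ZZ (1) (0) (-1) (-1) (0)); (ZZ (0) (0) (1) (1) (0)); (ZZ (1) (0) (0) (0) (0))], zc 2);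
 (0%nat, [:: (ZZ (0) (0) (0) (0) (0)); (ZZ (-1) (-2) (0) (-2) (0)); (ZZ (-1) (-2) (0) (-2) (0)); (ZZ (-2) (-4) (0) (-4) (0)); (ZZ (-3) (-6) (0) (-6) (0)); (ZZ (-5) (-10) (0) (-10) (0)); (ZZ (3) (6) (0) (6) (0)); (ZZ (-2) (-4) (0) (-4) (0)); (ZZ (1) (2) (0) (2) (0)); (ZZ (-1) (-2) (0) (-2) (0))], zc 80, [:: (ZZ (0) (0) (0) (0) (0)); (ZZ (-3) (-1) (1) (-2) (0)); (ZZ (1) (-3) (-2) (-1) (0)); (ZZ (3) (6) (4) (2) (0)); (ZZ (-6) (-7) (-3) (1) (0)); (ZZ (7) (4) (-4) (-7) (0)); (ZZ (29) (18) (7) (36) (0)); (ZZ (-18) (4) (-14) (-7) (0)); (ZZ (-4) (-8) (3) (-11) (0)); (ZZ (8) (1) (4) (7) (0)); (ZZ (-1) (3) (-3) (1) (0))], zc 20);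
 (0%nat, [:: (ZZ (3) (6) (-1) (7) (0)); (ZZ (0) (0) (0) (0) (0)); (ZZ (0) (0) (0) (0) (0)); (ZZ (0) (0) (0) (0) (0)); (ZZ (0) (0) (0) (0) (0)); (ZZ (-33) (-66) (11) (-77) (0)); (ZZ (0) (0) (0) (0) (0)); (ZZ (0) (0) (0) (0) (0)); (ZZ (0) (0) (0) (0) (0)); (ZZ (0) (0) (0) (0) (0)); (ZZ (-3) (-6) (1) (-7) (0))], zc 400, [:: (ZZ (0) (0) (0) (0) (0)); (ZZ (4) (3) (2) (6) (0)); (ZZ (-3) (-6) (1) (-7) (0)); (ZZ (-4) (7) (-7) (4) (0)); (ZZ (18) (-4) (14) (7) (0)); (ZZ (-36) (-7) (-18) (-29) (0)); (ZZ (3) (-4) (-11) (-8) (0)); (ZZ (4) (8) (7) (1) (0)); (ZZ (-3) (-1) (1) (3) (0)); (ZZ (1) (-3) (-2) (-1) (0)); (ZZ (-2) (1) (-1) (-3) (0))], zc 20);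
 (2%nat, [:: (ZZ (1) (2) (-2) (4) (0)); (ZZ (6) (12) (-2) (14) (0)); (ZZ (17) (34) (-14) (48) (0)); (ZZ (68) (136) (-36) (172) (0)); (ZZ (225) (450) (-150) (600) (0)); (ZZ (296) (592) (558) (34) (0)); (ZZ (-299) (-598) (-742) (144) (0)); (ZZ (1182) (2364) (1156) (1208) (0)); (ZZ (-247) (-494) (-3106) (2612) (0)); (ZZ (6900) (13800) (1650) (12150) (0)); (ZZ (248) (496) (3104) (-2608) (0)); (ZZ (1188) (2376) (1154) (1222) (0)); (ZZ (316) (632) (728) (-96) (0)); (ZZ (364) (728) (522) (206) (0)); (ZZ (0) (0) (0) (0) (0)); (ZZ (364) (728) (522) (206) (0)); (ZZ (-316) (-632) (-728) (96) (0)); (ZZ (1188) (2376) (1154) (1222) (0)); (ZZ (-248) (-496) (-3104) (2608) (0)); (ZZ (6900) (13800) (1650) (12150) (0)); (ZZ (247) (494) (3106) (-2612) (0)); (ZZ (1182) (2364) (1156) (1208) (0)); (ZZ (299) (598) (742) (-144) (0)); (ZZ (296) (592) (558) (34) (0)); (ZZ (-225) (-450) (150) (-600) (0)); (ZZ (68) (136) (-36) (172) (0)); (ZZ (-17) (-34) (14) (-48) (0)); (ZZ (6) (12) (-2) (14) (0)); (ZZ (-1) (-2) (2) (-4) (0))], zc 20, [:: (ZZ (0) (0) (0) (0) (0)); (ZZ (1) (0) (1) (1) (0)); (ZZ (1) (1) (0) (2) (0)); (ZZ (-2) (1) (-2) (0) (0)); (ZZ (-5) (-2) (-2) (-5) (0));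 (ZZ (0) (-5) (3) (-5) (0)); (ZZ (2) (0) (-3) (-3) (0)); (ZZ (2) (2) (0) (-1) (0)); (ZZ (1) (2) (1) (0) (0)); (ZZ (0) (1) (1) (0) (0)); (ZZ (0) (0) (1) (0) (0))], zc 2);
 (1%nat, [:: (ZZ (-2) (-4) (-1) (-3) (0)); (ZZ (3) (6) (4) (2) (0)); (ZZ (-9) (-18) (-12) (-6) (0)); (ZZ (24) (48) (37) (11) (0)); (ZZ (-70) (-140) (-110) (-30) (0)); (ZZ (-252) (-504) (99) (-603) (0)); (ZZ (83) (166) (-56) (222) (0)); (ZZ (-279) (-558) (128) (-686) (0)); (ZZ (234) (468) (-33) (501) (0)); (ZZ (-480) (-960) (-40) (-920) (0)); (ZZ (-234) (-468) (33) (-501) (0)); (ZZ (-279) (-558) (128) (-686) (0)); (ZZ (-83) (-166) (56) (-222) (0)); (ZZ (-252) (-504) (99) (-603) (0)); (ZZ (70) (140) (110) (30) (0)); (ZZ (24) (48) (37) (11) (0)); (ZZ (9) (18) (12) (6) (0)); (ZZ (3) (6) (4) (2) (0)); (ZZ (2) (4) (1) (3) (0))], zc 20, [:: (ZZ (0) (0) (0) (0) (0)); (ZZ (1) (0) (1) (1) (0)); (ZZ (0) (-1) (1) (-1) (0)); (ZZ (-3) (-1) (-1) (-3) (0)); (ZZ (-3) (2) (-3) (0) (0)); (ZZ (5) (5) (0) (8) (0)); (ZZ (2) (0) (-3) (-3) (0)); (ZZ (0) (-2) (-3) (-2) (0)); (ZZ (-1) (-2) (-2) (-1) (0)); (ZZ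 (-1) (-1) (-1) (0) (0)); (ZZ (0) (0) (0) (1) (0))], zc 2);
 (1%nat, [:: (ZZ (-1) (-2) (1) (-3) (0)); (ZZ (3) (6) (-2) (8) (0)); (ZZ (-9) (-18) (6) (-24) (0)); (ZZ (27) (54) (-17) (71) (0)); (ZZ (-80) (-160) (50) (-210) (0)); (ZZ (9) (18) (81) (-63) (0)); (ZZ (-17) (-34) (-22) (-12) (0)); (ZZ (21) (42) (86) (-44) (0)); (ZZ (27) (54) (-87) (141) (0)); (ZZ (-120) (-240) (200) (-440) (0)); (ZZ (-27) (-54) (87) (-141) (0)); (ZZ (21) (42) (86) (-44) (0)); (ZZ (17) (34) (22) (12) (0)); (ZZ (9) (18) (81) (-63) (0)); (ZZ (80) (160) (-50) (210) (0)); (ZZ (27) (54) (-17) (71) (0)); (ZZ (9) (18) (-6) (24) (0)); (ZZ (3) (6) (-2) (8) (0)); (ZZ (1) (2) (-1) (3) (0))], zc 80, [:: (ZZ (0) (0) (0) (0) (0)); (ZZ (4) (3) (2) (6) (0)); (ZZ (-8) (-1) (-4) (-7) (0)); (ZZ (11) (-3) (8) (4) (0)); (ZZ (-7) (11) (-11) (7) (0)); (ZZ (-11) (-22) (7) (-29) (0)); (ZZ (3) (-4) (-11) (-8) (0)); (ZZ (-6) (-7) (-3) (1) (0)); (ZZ (2) (4) (6) (3) (0)); (ZZ (1) (2) (-2) (-1) (0)); (ZZ (-2) (-4) (-1) (-3) (0))], zc 20);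
 (2%nat, [:: (ZZ (2) (4) (1) (3) (0)); (ZZ (2) (4) (6) (-2) (0)); (ZZ (14) (28) (17) (11) (0)); (ZZ (36) (72) (68) (4) (0)); (ZZ (150) (300) (225) (75) (0)); (ZZ (-558) (-1116) (296) (-1412) (0)); (ZZ (742) (1484) (-299) (1783) (0)); (ZZ (-1156) (-2312) (1182) (-3494) (0)); (ZZ (3106) (6212) (-247) (6459) (0)); (ZZ (-1650) (-3300) (6900) (-10200) (0)); (ZZ (-3104) (-6208) (248) (-6456) (0)); (ZZ (-1154) (-2308) (1188) (-3496) (0)); (ZZ (-728) (-1456) (316) (-1772) (0)); (ZZ (-522) (-1044) (364) (-1408) (0)); (ZZ (0) (0) (0) (0) (0)); (ZZ (-522) (-1044) (364) (-1408) (0)); (ZZ (728) (1456) (-316) (1772) (0)); (ZZ (-1154) (-2308) (1188) (-3496) (0)); (ZZ (3104) (6208) (-248) (6456) (0)); (ZZ (-1650) (-3300) (6900) (-10200) (0)); (ZZ (-3106) (-6212) (247) (-6459) (0)); (ZZ (-1156) (-2312) (1182) (-3494) (0)); (ZZ (-742) (-1484) (299) (-1783) (0)); (ZZ (-558) (-1116) (296) (-1412) (0)); (ZZ (-150) (-300) (-225) (-75) (0)); (ZZ (36) (72) (68) (4) (0)); (ZZ (-14) (-28) (-17) (-11) (0)); (ZZ (2) (4) (6) (-2) (0)); (ZZ (-2) (-4) (-1) (-3) (0))], zc 20, [:: (ZZ (0) (0) (0) (0) (0)); (ZZ (1) (0) (1) (1) (0)); (ZZ (-1) (1) (-1) (0)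 (0)); (ZZ (0) (-2) (1) (-2) (0)); (ZZ (3) (3) (0) (5) (0)); (ZZ (-8) (-3) (-3) (-8) (0)); (ZZ (2) (0) (-3) (-3) (0)); (ZZ (-2) (-3) (-2) (0) (0)); (ZZ (0) (1) (2) (1) (0)); (ZZ (1) (1) (0) (0) (0)); (ZZ (-1) (-1) (-1) (-1) (0))], zc 2);
 (1%nat, [:: (ZZ (1) (2) (0) (2) (0)); (ZZ (-1) (-2) (-1) (-1) (0)); (ZZ (3) (6) (3) (3) (0)); (ZZ (-7) (-14) (-10) (-4) (0)); (ZZ (20) (40) (30) (10) (0)); (ZZ (171) (342) (-90) (432) (0)); (ZZ (-61) (-122) (39) (-161) (0)); (ZZ (193) (386) (-107) (493) (0)); (ZZ (-147) (-294) (60) (-354) (0)); (ZZ (280) (560) (-80) (640) (0)); (ZZ (147) (294) (-60) (354) (0)); (ZZ (193) (386) (-107) (493) (0)); (ZZ (61) (122) (-39) (161) (0)); (ZZ (171) (342) (-90) (432) (0)); (ZZ (-20) (-40) (-30) (-10) (0)); (ZZ (-7) (-14) (-10) (-4) (0)); (ZZ (-3) (-6) (-3) (-3) (0)); (ZZ (-1) (-2) (-1) (-1) (0)); (ZZ (-1) (-2) (0) (-2) (0))], zc 80, [:: (ZZ (0) (0) (0) (0) (0)); (ZZ (-3) (-1) (1) (-2) (0)); (ZZ (1) (2) (-2) (-1) (0)); (ZZ (-2) (-4) (-1) (2) (0)); (ZZ (4) (8) (7) (1) (0)); (ZZ (-3) (-11) (-14) (-7) (0)); (ZZ (29) (18)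 (7) (36) (0)); (ZZ (7) (-11) (11) (-7) (0)); (ZZ (-14) (-3) (-7) (-11) (0)); (ZZ (3) (6) (-1) (7) (0)); (ZZ (4) (-2) (2) (1) (0))], zc 20);
 (0%nat, [:: (ZZ (0) (0) (0) (0) (0)); (ZZ (1) (2) (0) (2) (0)); (ZZ (1) (2) (0) (2) (0)); (ZZ (2) (4) (0) (4) (0)); (ZZ (3) (6) (0) (6) (0)); (ZZ (5) (10) (0) (10) (0)); (ZZ (-3) (-6) (0) (-6) (0)); (ZZ (2) (4) (0) (4) (0)); (ZZ (-1) (-2) (0) (-2) (0)); (ZZ (1) (2) (0) (2) (0))], zc 80, [:: (ZZ (0) (0) (0) (0) (0)); (ZZ (-2) (1) (-1) (2) (0)); (ZZ (4) (3) (2) (1) (0)); (ZZ (-3) (-6) (-4) (-2) (0)); (ZZ (1) (7) (8) (4) (0)); (ZZ (3) (-4) (-11) (-8) (0)); (ZZ (11) (-18) (18) (-11) (0)); (ZZ (-22) (-4) (-11) (-18) (0)); (ZZ (4) (8) (-3) (11) (0)); (ZZ (7) (-1) (6) (3) (0)); (ZZ (-4) (-3) (-2) (-6) (0))], zc 20);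
 (1%nat, [:: (ZZ (-1) (-2) (0) (-2) (0)); (ZZ (1) (2) (1) (1) (0)); (ZZ (-3) (-6) (-3) (-3) (0)); (ZZ (7) (14) (10) (4) (0)); (ZZ (-20) (-40) (-30) (-10) (0)); (ZZ (-171) (-342) (90) (-432) (0)); (ZZ (61) (122) (-39) (161) (0)); (ZZ (-193) (-386) (107) (-493) (0)); (ZZ (147) (294) (-60) (354) (0)); (ZZ (-280) (-560) (80) (-640) (0)); (ZZ (-147) (-294) (60) (-354) (0)); (ZZ (-193) (-386) (107) (-493) (0)); (ZZ (-61) (-122) (39) (-161) (0)); (ZZ (-171) (-342) (90) (-432) (0)); (ZZ (20) (40) (30) (10) (0)); (ZZ (7) (14) (10) (4) (0)); (ZZ (3) (6) (3) (3) (0)); (ZZ (1) (2) (1) (1) (0)); (ZZ (1) (2) (0) (2) (0))], zc 80, [:: (ZZ (0) (0) (0) (0) (0)); (ZZ (-3) (-1) (1) (-2) (0)); (ZZ (1) (-3) (-2) (-1) (0)); (ZZ (3) (6) (4) (2) (0)); (ZZ (-6) (-7) (-3) (1) (0)); (ZZ (7) (4) (-4) (-7) (0)); (ZZ (29) (18) (7) (36) (0)); (ZZ (-18) (4) (-14) (-7) (0)); (ZZ (-4) (-8) (3) (-11) (0)); (ZZ (8) (1) (4) (7) (0)); (ZZ (-1) (3) (-3) (1) (0))], zc 20);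
 (1%nat, [:: (ZZ (1) (2) (-1) (3) (0)); (ZZ (-3) (-6) (2) (-8) (0)); (ZZ (9) (18) (-6) (24) (0)); (ZZ (-27) (-54) (17) (-71) (0)); (ZZ (80) (160) (-50) (210) (0)); (ZZ (-9) (-18) (-81) (63) (0)); (ZZ (17) (34) (22) (12) (0)); (ZZ (-21) (-42) (-86) (44) (0)); (ZZ (-27) (-54) (87) (-141) (0)); (ZZ (120) (240) (-200) (440) (0)); (ZZ (27) (54) (-87) (141) (0)); (ZZ (-21) (-42) (-86) (44) (0)); (ZZ (-17) (-34) (-22) (-12) (0)); (ZZ (-9) (-18) (-81) (63) (0)); (ZZ (-80) (-160) (50) (-210) (0)); (ZZ (-27) (-54) (17) (-71) (0)); (ZZ (-9) (-18) (6) (-24) (0)); (ZZ (-3) (-6) (2) (-8) (0)); (ZZ (-1) (-2) (1) (-3) (0))], zc 80, [:: (ZZ (0) (0) (0) (0) (0)); (ZZ (4) (3) (2) (6) (0)); (ZZ (-3) (-6) (1) (-7) (0)); (ZZ (-4) (7) (-7) (4) (0)); (ZZ (18) (-4) (14) (7) (0)); (ZZ (-36) (-7) (-18) (-29) (0)); (ZZ (3) (-4) (-11) (-8) (0)); (ZZ (4) (8) (7) (1) (0)); (ZZ (-3) (-1) (1) (3) (0)); (ZZ (1) (-3) (-2) (-1) (0)); (ZZ (-2) (1) (-1) (-3) (0))], zc 20);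
 (0%nat, [:: (ZZ (0) (0) (0) (0) (0)); (ZZ (2) (4) (1) (3) (0)); (ZZ (2) (4) (1) (3) (0)); (ZZ (4) (8) (2) (6) (0)); (ZZ (6) (12) (3) (9) (0)); (ZZ (10) (20) (5) (15) (0)); (ZZ (-6) (-12) (-3) (-9) (0)); (ZZ (4) (8) (2) (6) (0)); (ZZ (-2) (-4) (-1) (-3) (0)); (ZZ (2) (4) (1) (3) (0))], zc 20, [:: (ZZ (0) (0) (0) (0) (0)); (ZZ (1) (0) (1) (1) (0)); (ZZ (1) (1) (0) (2) (0)); (ZZ (-2) (1) (-2) (0) (0)); (ZZ (-5) (-2) (-2) (-5) (0)); (ZZ (0) (-5) (3) (-5) (0)); (ZZ (2) (0) (-3) (-3) (0)); (ZZ (2) (2) (0) (-1) (0)); (ZZ (1) (2) (1) (0) (0)); (ZZ (0) (1) (1) (0) (0)); (ZZ (0) (0) (1) (0) (0))], zc 2);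
 (2%nat, [:: (ZZ (-1) (-2) (1) (-3) (0)); (ZZ (-4) (-8) (2) (-10) (0)); (ZZ (-13) (-26) (9) (-35) (0)); (ZZ (-48) (-96) (28) (-124) (0)); (ZZ (-165) (-330) (105) (-435) (0)); (ZZ (-66) (-132) (-164) (32) (0)); (ZZ (31) (62) (237) (-175) (0)); (ZZ (-478) (-956) (-226) (-730) (0)); (ZZ (-473) (-946) (1193) (-2139) (0)); (ZZ (-3810) (-7620) (720) (-8340) (0)); (ZZ (472) (944) (-1192) (2136) (0)); (ZZ (-482) (-964) (-224) (-740) (0)); (ZZ (-44) (-88) (-228) (140) (0)); (ZZ (-114) (-228) (-136) (-92) (0)); (ZZ (0) (0) (0) (0) (0)); (ZZ (-114) (-228) (-136) (-92) (0)); (ZZ (44) (88) (228) (-140) (0)); (ZZ (-482) (-964) (-224) (-740) (0)); (ZZ (-472) (-944) (1192) (-2136) (0)); (ZZ (-3810) (-7620) (720) (-8340) (0)); (ZZ (473) (946) (-1193) (2139) (0)); (ZZ (-478) (-956) (-226) (-730) (0)); (ZZ (-31) (-62) (-237) (175) (0)); (ZZ (-66) (-132) (-164) (32) (0)); (ZZ (165) (330) (-105) (435) (0)); (ZZ (-48) (-96) (28) (-124) (0)); (ZZ (13) (26) (-9) (35) (0)); (ZZ (-4) (-8) (2) (-10) (0)); (ZZ (1) (2) (-1) (3) (0))], zc 80, [:: (ZZ (0) (0) (0) (0) (0)); (ZZ (4) (3) (2) (6) (0)); (ZZ (7) (-1) (6) (3) (0)); (ZZ (-4) (-8) (3) (-11)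 (0)); (ZZ (-22) (-4) (-11) (-18) (0)); (ZZ (-11) (18) (-18) (11) (0)); (ZZ (3) (-4) (-11) (-8) (0)); (ZZ (-1) (-7) (-8) (-4) (0)); (ZZ (-3) (-6) (-4) (-2) (0)); (ZZ (-4) (-3) (-2) (-1) (0)); (ZZ (-2) (1) (-1) (2) (0))], zc 20);
 (0%nat, [:: (ZZ (0) (0) (0) (0) (0)); (ZZ (-2) (-4) (-1) (-3) (0)); (ZZ (-2) (-4) (-1) (-3) (0)); (ZZ (-4) (-8) (-2) (-6) (0)); (ZZ (-6) (-12) (-3) (-9) (0)); (ZZ (-10) (-20) (-5) (-15) (0)); (ZZ (6) (12) (3) (9) (0)); (ZZ (-4) (-8) (-2) (-6) (0)); (ZZ (2) (4) (1) (3) (0)); (ZZ (-2) (-4) (-1) (-3) (0))], zc 20, [:: (ZZ (0) (0) (0) (0) (0)); (ZZ (1) (0) (1) (1) (0)); (ZZ (0) (-1) (1) (-1) (0)); (ZZ (-3) (-1) (-1) (-3) (0)); (ZZ (-3) (2) (-3) (0) (0)); (ZZ (5) (5) (0) (8) (0)); (ZZ (2) (0) (-3) (-3) (0)); (ZZ (0) (-2) (-3) (-2) (0)); (ZZ (-1) (-2) (-2) (-1) (0)); (ZZ (-1) (-1) (-1) (0) (0)); (ZZ (0) (0) (0) (1) (0))], zc 2);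
 (1%nat, [:: (ZZ (1) (2) (0) (2) (0)); (ZZ (-1) (-2) (-1) (-1) (0)); (ZZ (3) (6) (3) (3) (0)); (ZZ (-7) (-14) (-10) (-4) (0)); (ZZ (20) (40) (30) (10) (0)); (ZZ (171) (342) (-90) (432) (0)); (ZZ (-61) (-122) (39) (-161) (0)); (ZZ (193) (386) (-107) (493) (0)); (ZZ (-147) (-294) (60) (-354) (0)); (ZZ (280) (560) (-80) (640) (0)); (ZZ (147) (294) (-60) (354) (0)); (ZZ (193) (386) (-107) (493) (0)); (ZZ (61) (122) (-39) (161) (0)); (ZZ (171) (342) (-90) (432) (0)); (ZZ (-20) (-40) (-30) (-10) (0)); (ZZ (-7) (-14) (-10) (-4) (0)); (ZZ (-3) (-6) (-3) (-3) (0)); (ZZ (-1) (-2) (-1) (-1) (0)); (ZZ (-1) (-2) (0) (-2) (0))], zc 80, [:: (ZZ (0) (0) (0) (0) (0)); (ZZ (-3) (-1) (1) (-2) (0)); (ZZ (1) (2) (3) (-1) (0)); (ZZ (3) (1) (-1) (-3) (0)); (ZZ (-1) (-7) (-8) (-4) (0)); (ZZ (-8) (-11) (-4) (3) (0)); (ZZ (29) (18) (7) (36) (0)); (ZZ (7) (14) (-4) (18) (0)); (ZZ (-4) (7) (-7) (4) (0)); (ZZ (-7) (1) (-6) (-3) (0)); (ZZ (-6) (-2) (-3) (-4) (0))], zc 20);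
 (2%nat, [:: (ZZ (-1) (-2) (0) (-2) (0)); (ZZ (0) (0) (-2) (2) (0)); (ZZ (-5) (-10) (-4) (-6) (0)); (ZZ (-8) (-16) (-20) (4) (0)); (ZZ (-45) (-90) (-60) (-30) (0)); (ZZ (394) (788) (-230) (1018) (0)); (ZZ (-505) (-1010) (268) (-1278) (0)); (ZZ (930) (1860) (-704) (2564) (0)); (ZZ (-1913) (-3826) (720) (-4546) (0)); (ZZ (2370) (4740) (-3090) (7830) (0)); (ZZ (1912) (3824) (-720) (4544) (0)); (ZZ (930) (1860) (-706) (2566) (0)); (ZZ (500) (1000) (-272) (1272) (0)); (ZZ (386) (772) (-250) (1022) (0)); (ZZ (0) (0) (0) (0) (0)); (ZZ (386) (772) (-250) (1022) (0)); (ZZ (-500) (-1000) (272) (-1272) (0)); (ZZ (930) (1860) (-706) (2566) (0)); (ZZ (-1912) (-3824) (720) (-4544) (0)); (ZZ (2370) (4740) (-3090) (7830) (0)); (ZZ (1913) (3826) (-720) (4546) (0)); (ZZ (930) (1860) (-704) (2564) (0)); (ZZ (505) (1010) (-268) (1278) (0)); (ZZ (394) (788) (-230) (1018) (0)); (ZZ (45) (90) (60) (30) (0)); (ZZ (-8) (-16) (-20) (4) (0)); (ZZ (5) (10) (4) (6) (0)); (ZZ (0) (0) (-2) (2) (0)); (ZZ (1) (2) (0) (2) (0))], zc 80, [:: (ZZ (0) (0) (0) (0) (0)); (ZZ (-2) (1) (-1) (2) (0)); (ZZ (-1) (3) (2) (1) (0)); (ZZ (2) (4) (1) (-2) (0));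 (ZZ (1) (-3) (-7) (-6) (0)); (ZZ (-7) (-14) (-11) (-3) (0)); (ZZ (11) (-18) (18) (-11) (0)); (ZZ (18) (-4) (14) (7) (0)); (ZZ (14) (3) (7) (11) (0)); (ZZ (7) (4) (1) (8) (0)); (ZZ (1) (2) (-2) (4) (0))], zc 20);
 (2%nat, [:: (ZZ (1) (2) (-1) (3) (0)); (ZZ (4) (8) (-2) (10) (0)); (ZZ (13) (26) (-9) (35) (0)); (ZZ (48) (96) (-28) (124) (0)); (ZZ (165) (330) (-105) (435) (0)); (ZZ (66) (132) (164) (-32) (0)); (ZZ (-31) (-62) (-237) (175) (0)); (ZZ (478) (956) (226) (730) (0)); (ZZ (473) (946) (-1193) (2139) (0)); (ZZ (3810) (7620) (-720) (8340) (0)); (ZZ (-472) (-944) (1192) (-2136) (0)); (ZZ (482) (964) (224) (740) (0)); (ZZ (44) (88) (228) (-140) (0)); (ZZ (114) (228) (136) (92) (0)); (ZZ (0) (0) (0) (0) (0)); (ZZ (114) (228) (136) (92) (0)); (ZZ (-44) (-88) (-228) (140) (0)); (ZZ (482) (964) (224) (740) (0)); (ZZ (472) (944) (-1192) (2136) (0)); (ZZ (3810) (7620) (-720) (8340) (0)); (ZZ (-473) (-946) (1193) (-2139) (0)); (ZZ (478) (956) (226) (730) (0)); (ZZ (31) (62) (237) (-175) (0)); (ZZ (66) (132) (164) (-32) (0)); (ZZ (-165) (-330) (105) (-435) (0)); (ZZ (48) (96) (-28) (124) (0)); (ZZ (-13) (-26) (9) (-35) (0)); (ZZ (4) (8) (-2)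 (10) (0)); (ZZ (-1) (-2) (1) (-3) (0))], zc 80, [:: (ZZ (0) (0) (0) (0) (0)); (ZZ (-2) (1) (-1) (2) (0)); (ZZ (4) (3) (2) (1) (0)); (ZZ (-3) (-6) (-4) (-2) (0)); (ZZ (1) (7) (8) (4) (0)); (ZZ (3) (-4) (-11) (-8) (0)); (ZZ (11) (-18) (18) (-11) (0)); (ZZ (-22) (-4) (-11) (-18) (0)); (ZZ (4) (8) (-3) (11) (0)); (ZZ (7) (-1) (6) (3) (0)); (ZZ (-4) (-3) (-2) (-6) (0))], zc 20);
 (1%nat, [:: (ZZ (1) (2) (-1) (3) (0)); (ZZ (-3) (-6) (2) (-8) (0)); (ZZ (9) (18) (-6) (24) (0)); (ZZ (-27) (-54) (17) (-71) (0)); (ZZ (80) (160) (-50) (210) (0)); (ZZ (-9) (-18) (-81) (63) (0)); (ZZ (17) (34) (22) (12) (0)); (ZZ (-21) (-42) (-86) (44) (0)); (ZZ (-27) (-54) (87) (-141) (0)); (ZZ (120) (240) (-200) (440) (0)); (ZZ (27) (54) (-87) (141) (0)); (ZZ (-21) (-42) (-86) (44) (0)); (ZZ (-17) (-34) (-22) (-12) (0)); (ZZ (-9) (-18) (-81) (63) (0)); (ZZ (-80) (-160) (50) (-210) (0)); (ZZ (-27) (-54) (17) (-71) (0)); (ZZ (-9) (-18) (6) (-24) (0)); (ZZ (-3) (-6) (2) (-8) (0)); (ZZ (-1) (-2) (1) (-3) (0))], zc 80, [:: (ZZ (0) (0) (0) (0) (0)); (ZZ (-3) (-1) (1) (-2)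 (0)); (ZZ (1) (-3) (-2) (-1) (0)); (ZZ (3) (6) (4) (2) (0)); (ZZ (-6) (-7) (-3) (1) (0)); (ZZ (7) (4) (-4) (-7) (0)); (ZZ (29) (18) (7) (36) (0)); (ZZ (-18) (4) (-14) (-7) (0)); (ZZ (-4) (-8) (3) (-11) (0)); (ZZ (8) (1) (4) (7) (0)); (ZZ (-1) (3) (-3) (1) (0))], zc 20);
 (1%nat, [:: (ZZ (3) (6) (-1) (7) (0)); (ZZ (-2) (-4) (-1) (-3) (0)); (ZZ (6) (12) (3) (9) (0)); (ZZ (-11) (-22) (-13) (-9) (0)); (ZZ (30) (60) (40) (20) (0)); (ZZ (603) (1206) (-351) (1557) (0)); (ZZ (-222) (-444) (139) (-583) (0)); (ZZ (686) (1372) (-407) (1779) (0)); (ZZ (-501) (-1002) (267) (-1269) (0)); (ZZ (920) (1840) (-440) (2280) (0)); (ZZ (501) (1002) (-267) (1269) (0)); (ZZ (686) (1372) (-407) (1779) (0)); (ZZ (222) (444) (-139) (583) (0)); (ZZ (603) (1206) (-351) (1557) (0)); (ZZ (-30) (-60) (-40) (-20) (0)); (ZZ (-11) (-22) (-13) (-9) (0)); (ZZ (-6) (-12) (-3) (-9) (0)); (ZZ (-2) (-4) (-1) (-3) (0)); (ZZ (-3) (-6) (1) (-7) (0))], zc 1600, [:: (ZZ (0) (0) (0) (0) (0)); (ZZ (0) (3) (-1) (3) (0)); (ZZ (4) (-3) (4) (0) (0)); (ZZ (-11) (0) (-7) (-7) (0)); (ZZ (18) (7) (7) (18) (0)); (ZZ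 (-18) (-18) (0) (-29) (0)); (ZZ (0) (-4) (-7) (-4) (0)); (ZZ (3) (4) (3) (0) (0)); (ZZ (-2) (0) (1) (1) (0)); (ZZ (1) (-1) (-1) (1) (0)); (ZZ (-1) (-1) (0) (-3) (0))], zc 40);
 (2%nat, [:: (ZZ (-1) (-2) (0) (-2) (0)); (ZZ (0) (0) (-2) (2) (0)); (ZZ (-5) (-10) (-4) (-6) (0)); (ZZ (-8) (-16) (-20) (4) (0)); (ZZ (-45) (-90) (-60) (-30) (0)); (ZZ (394) (788) (-230) (1018) (0)); (ZZ (-505) (-1010) (268) (-1278) (0)); (ZZ (930) (1860) (-704) (2564) (0)); (ZZ (-1913) (-3826) (720) (-4546) (0)); (ZZ (2370) (4740) (-3090) (7830) (0)); (ZZ (1912) (3824) (-720) (4544) (0)); (ZZ (930) (1860) (-706) (2566) (0)); (ZZ (500) (1000) (-272) (1272) (0)); (ZZ (386) (772) (-250) (1022) (0)); (ZZ (0) (0) (0) (0) (0)); (ZZ (386) (772) (-250) (1022) (0)); (ZZ (-500) (-1000) (272) (-1272) (0)); (ZZ (930) (1860) (-706) (2566) (0)); (ZZ (-1912) (-3824) (720) (-4544) (0)); (ZZ (2370) (4740) (-3090) (7830) (0)); (ZZ (1913) (3826) (-720) (4546) (0)); (ZZ (930) (1860) (-704) (2564) (0)); (ZZ (505) (1010) (-268) (1278) (0)); (ZZ (394) (788) (-230) (1018) (0)); (ZZ (45) (90) (60) (30) (0)); (ZZ (-8) (-16) (-20) (4) (0)); (ZZ (5) (10) (4) (6) (0));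 (ZZ (0) (0) (-2) (2) (0)); (ZZ (1) (2) (0) (2) (0))], zc 80, [:: (ZZ (0) (0) (0) (0) (0)); (ZZ (4) (3) (2) (6) (0)); (ZZ (-3) (-6) (1) (-7) (0)); (ZZ (-4) (7) (-7) (4) (0)); (ZZ (18) (-4) (14) (7) (0)); (ZZ (-36) (-7) (-18) (-29) (0)); (ZZ (3) (-4) (-11) (-8) (0)); (ZZ (4) (8) (7) (1) (0)); (ZZ (-3) (-1) (1) (3) (0)); (ZZ (1) (-3) (-2) (-1) (0)); (ZZ (-2) (1) (-1) (-3) (0))], zc 20);
 (1%nat, [:: (ZZ (-4) (-8) (3) (-11) (0)); (ZZ (11) (22) (-7) (29) (0)); (ZZ (-33) (-66) (21) (-87) (0)); (ZZ (98) (196) (-61) (257) (0)); (ZZ (-290) (-580) (180) (-760) (0)); (ZZ (-54) (-108) (153) (-261) (0)); (ZZ (-29) (-58) (-27) (-31) (0)); (ZZ (-23) (-46) (151) (-197) (0)); (ZZ (168) (336) (-201) (537) (0)); (ZZ (-560) (-1120) (520) (-1640) (0)); (ZZ (-168) (-336) (201) (-537) (0)); (ZZ (-23) (-46) (151) (-197) (0)); (ZZ (29) (58) (27) (31) (0)); (ZZ (-54) (-108) (153) (-261) (0)); (ZZ (290) (580) (-180) (760) (0)); (ZZ (98) (196) (-61) (257) (0)); (ZZ (33) (66) (-21) (87) (0)); (ZZ (11) (22) (-7) (29) (0)); (ZZ (4) (8) (-3) (11) (0))], zc 1600, [:: (ZZ (0) (0) (0) (0) (0)); (ZZ (0) (3)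 (-1) (3) (0)); (ZZ (-7) (0) (-4) (-4) (0)); (ZZ (-7) (-7) (0) (-11) (0)); (ZZ (11) (-7) (11) (0) (0)); (ZZ (29) (11) (11) (29) (0)); (ZZ (0) (-4) (-7) (-4) (0)); (ZZ (1) (0) (-3) (-3) (0)); (ZZ (1) (1) (0) (-2) (0)); (ZZ (2) (1) (2) (0) (0)); (ZZ (3) (2) (2) (3) (0))], zc 40);
 (1%nat, [:: (ZZ (2) (4) (1) (3) (0)); (ZZ (-3) (-6) (-4) (-2) (0)); (ZZ (9) (18) (12) (6) (0)); (ZZ (-24) (-48) (-37) (-11) (0)); (ZZ (70) (140) (110) (30) (0)); (ZZ (252) (504) (-99) (603) (0)); (ZZ (-83) (-166) (56) (-222) (0)); (ZZ (279) (558) (-128) (686) (0)); (ZZ (-234) (-468) (33) (-501) (0)); (ZZ (480) (960) (40) (920) (0)); (ZZ (234) (468) (-33) (501) (0)); (ZZ (279) (558) (-128) (686) (0)); (ZZ (83) (166) (-56) (222) (0)); (ZZ (252) (504) (-99) (603) (0)); (ZZ (-70) (-140) (-110) (-30) (0)); (ZZ (-24) (-48) (-37) (-11) (0)); (ZZ (-9) (-18) (-12) (-6) (0)); (ZZ (-3) (-6) (-4) (-2) (0)); (ZZ (-2) (-4) (-1) (-3) (0))], zc 20, [:: (ZZ (0) (0) (0) (0) (0)); (ZZ (1) (0) (1) (1) (0)); (ZZ (1) (1) (0) (2) (0)); (ZZ (-2) (1) (-2) (0) (0)); (ZZ (-5) (-2) (-2) (-5) (0)); (ZZ (0) (-5)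 (3) (-5) (0)); (ZZ (2) (0) (-3) (-3) (0)); (ZZ (2) (2) (0) (-1) (0)); (ZZ (1) (2) (1) (0) (0)); (ZZ (0) (1) (1) (0) (0)); (ZZ (0) (0) (1) (0) (0))], zc 2);
 (0%nat, [:: (ZZ (0) (0) (0) (0) (0)); (ZZ (-1) (-2) (0) (-2) (0)); (ZZ (-1) (-2) (0) (-2) (0)); (ZZ (-2) (-4) (0) (-4) (0)); (ZZ (-3) (-6) (0) (-6) (0)); (ZZ (-5) (-10) (0) (-10) (0)); (ZZ (3) (6) (0) (6) (0)); (ZZ (-2) (-4) (0) (-4) (0)); (ZZ (1) (2) (0) (2) (0)); (ZZ (-1) (-2) (0) (-2) (0))], zc 80, [:: (ZZ (0) (0) (0) (0) (0)); (ZZ (-3) (-1) (1) (-2) (0)); (ZZ (1) (2) (3) (4) (0)); (ZZ (-2) (1) (4) (2) (0)); (ZZ (-1) (3) (7) (6) (0)); (ZZ (-3) (4) (11) (8) (0)); (ZZ (29) (18) (7) (36) (0)); (ZZ (-18) (-11) (-4) (-22) (0)); (ZZ (11) (7) (3) (14) (0)); (ZZ (-7) (-4) (-1) (-8) (0)); (ZZ (4) (3) (2) (6) (0))], zc 20);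
 (0%nat, [:: (ZZ (0) (0) (0) (0) (0)); (ZZ (1) (2) (0) (2) (0)); (ZZ (1) (2) (0) (2) (0)); (ZZ (2) (4) (0) (4) (0)); (ZZ (3) (6) (0) (6) (0)); (ZZ (5) (10) (0) (10) (0)); (ZZ (-3) (-6) (0) (-6) (0)); (ZZ (2) (4) (0) (4) (0)); (ZZ (-1) (-2) (0) (-2) (0)); (ZZ (1) (2) (0) (2) (0))], zc 80, [:: (ZZ (0) (0) (0) (0) (0)); (ZZ (-2) (1) (-1) (2) (0)); (ZZ (-1) (-2) (2) (1) (0)); (ZZ (-3) (-1) (1) (3) (0)); (ZZ (-4) (-3) (3) (4) (0)); (ZZ (-7) (-4) (4) (7) (0)); (ZZ (11) (-18) (18) (-11) (0)); (ZZ (-7) (11) (-11) (7) (0)); (ZZ (4) (-7) (7) (-4) (0)); (ZZ (-3) (4) (-4) (3) (0)); (ZZ (1) (-3) (3) (-1) (0))], zc 20);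
 (1%nat, [:: (ZZ (1) (2) (-1) (3) (0)); (ZZ (-3) (-6) (2) (-8) (0)); (ZZ (9) (18) (-6) (24) (0)); (ZZ (-27) (-54) (17) (-71) (0)); (ZZ (80) (160) (-50) (210) (0)); (ZZ (-9) (-18) (-81) (63) (0)); (ZZ (17) (34) (22) (12) (0)); (ZZ (-21) (-42) (-86) (44) (0)); (ZZ (-27) (-54) (87) (-141) (0)); (ZZ (120) (240) (-200) (440) (0)); (ZZ (27) (54) (-87) (141) (0)); (ZZ (-21) (-42) (-86) (44) (0)); (ZZ (-17) (-34) (-22) (-12) (0)); (ZZ (-9) (-18) (-81) (63) (0)); (ZZ (-80) (-160) (50) (-210) (0)); (ZZ (-27) (-54) (17) (-71) (0)); (ZZ (-9) (-18) (6) (-24) (0)); (ZZ (-3) (-6) (2) (-8) (0)); (ZZ (-1) (-2) (1) (-3) (0))], zc 80, [:: (ZZ (0) (0) (0) (0) (0)); (ZZ (-2) (1) (-1) (2) (0)); (ZZ (-1) (3) (2) (1) (0)); (ZZ (2) (4) (1) (-2) (0)); (ZZ (1) (-3) (-7) (-6) (0)); (ZZ (-7) (-14) (-11) (-3) (0)); (ZZ (11) (-18) (18) (-11) (0)); (ZZ (18) (-4) (14) (7) (0)); (ZZ (14) (3) (7) (11) (0)); (ZZ (7) (4) (1) (8) (0)); (ZZ (1) (2) (-2) (4) (0))], zc 20);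
 (0%nat, [:: (ZZ (-1) (-2) (2) (-4) (0)); (ZZ (0) (0) (0) (0) (0)); (ZZ (0) (0) (0) (0) (0)); (ZZ (0) (0) (0) (0) (0)); (ZZ (0) (0) (0) (0) (0)); (ZZ (11) (22) (-22) (44) (0)); (ZZ (0) (0) (0) (0) (0)); (ZZ (0) (0) (0) (0) (0)); (ZZ (0) (0) (0) (0) (0)); (ZZ (0) (0) (0) (0) (0)); (ZZ (1) (2) (-2) (4) (0))], zc 400, [:: (ZZ (0) (0) (0) (0) (0)); (ZZ (-2) (1) (-1) (2) (0)); (ZZ (4) (3) (2) (1) (0)); (ZZ (-3) (-6) (-4) (-2) (0)); (ZZ (1) (7) (8) (4) (0)); (ZZ (3) (-4) (-11) (-8) (0)); (ZZ (11) (-18) (18) (-11) (0)); (ZZ (-22) (-4) (-11) (-18) (0)); (ZZ (4) (8) (-3) (11) (0)); (ZZ (7) (-1) (6) (3) (0)); (ZZ (-4) (-3) (-2) (-6) (0))], zc 20);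
 (2%nat, [:: (ZZ (-4) (-8) (3) (-11) (0)); (ZZ (-14) (-28) (8) (-36) (0)); (ZZ (-48) (-96) (31) (-127) (0)); (ZZ (-172) (-344) (104) (-448) (0)); (ZZ (-600) (-1200) (375) (-1575) (0)); (ZZ (-34) (-68) (-262) (194) (0)); (ZZ (-144) (-288) (443) (-731) (0)); (ZZ (-1208) (-2416) (26) (-2442) (0)); (ZZ (-2612) (-5224) (2859) (-8083) (0)); (ZZ (-12150) (-24300) (5250) (-29550) (0)); (ZZ (2608) (5216) (-2856) (8072) (0)); (ZZ (-1222) (-2444) (34) (-2478) (0)); (ZZ (96) (192) (-412) (604) (0)); (ZZ (-206) (-412) (-158) (-254) (0)); (ZZ (0) (0) (0) (0) (0)); (ZZ (-206) (-412) (-158) (-254) (0)); (ZZ (-96) (-192) (412) (-604) (0)); (ZZ (-1222) (-2444) (34) (-2478) (0)); (ZZ (-2608) (-5216) (2856) (-8072) (0)); (ZZ (-12150) (-24300) (5250) (-29550) (0)); (ZZ (2612) (5224) (-2859) (8083) (0)); (ZZ (-1208) (-2416) (26) (-2442) (0)); (ZZ (144) (288) (-443) (731) (0)); (ZZ (-34) (-68) (-262) (194) (0)); (ZZ (600) (1200) (-375) (1575) (0)); (ZZ (-172) (-344) (104) (-448) (0)); (ZZ (48) (96) (-31) (127) (0)); (ZZ (-14) (-28) (8) (-36) (0)); (ZZ (4) (8) (-3) (11) (0))], zc 1600, [:: (ZZ (0) (0) (0) (0) (0)); (ZZ (0) (-1) (2) (-1) (0)); (ZZ (1) (-1) (-1)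 (1) (0)); (ZZ (1) (3) (1) (0) (0)); (ZZ (-3) (-3) (0) (1) (0)); (ZZ (3) (0) (-4) (-4) (0)); (ZZ (0) (18) (-11) (18) (0)); (ZZ (-18) (-7) (-7) (-18) (0)); (ZZ (7) (-4) (7) (0) (0)); (ZZ (4) (4) (0) (7) (0)); (ZZ (-4) (0) (-3) (-3) (0))], zc 40);
 (0%nat, [:: (ZZ (1) (2) (-2) (4) (0)); (ZZ (0) (0) (0) (0) (0)); (ZZ (0) (0) (0) (0) (0)); (ZZ (0) (0) (0) (0) (0)); (ZZ (0) (0) (0) (0) (0)); (ZZ (-11) (-22) (22) (-44) (0)); (ZZ (0) (0) (0) (0) (0)); (ZZ (0) (0) (0) (0) (0)); (ZZ (0) (0) (0) (0) (0)); (ZZ (0) (0) (0) (0) (0)); (ZZ (-1) (-2) (2) (-4) (0))], zc 400, [:: (ZZ (0) (0) (0) (0) (0)); (ZZ (-3) (-1) (1) (-2) (0)); (ZZ (1) (-3) (-2) (-1) (0)); (ZZ (3) (6) (4) (2) (0)); (ZZ (-6) (-7) (-3) (1) (0)); (ZZ (7) (4) (-4) (-7) (0)); (ZZ (29) (18) (7) (36) (0)); (ZZ (-18) (4) (-14) (-7) (0)); (ZZ (-4) (-8) (3) (-11) (0)); (ZZ (8) (1) (4) (7) (0)); (ZZ (-1) (3) (-3) (1) (0))], zc 20);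
 (1%nat, [:: (ZZ (-4) (-8) (3) (-11) (0)); (ZZ (11) (22) (-7) (29) (0)); (ZZ (-33) (-66) (21) (-87) (0)); (ZZ (98) (196) (-61) (257) (0)); (ZZ (-290) (-580) (180) (-760) (0)); (ZZ (-54) (-108) (153) (-261) (0)); (ZZ (-29) (-58) (-27) (-31) (0)); (ZZ (-23) (-46) (151) (-197) (0)); (ZZ (168) (336) (-201) (537) (0)); (ZZ (-560) (-1120) (520) (-1640) (0)); (ZZ (-168) (-336) (201) (-537) (0)); (ZZ (-23) (-46) (151) (-197) (0)); (ZZ (29) (58) (27) (31) (0)); (ZZ (-54) (-108) (153) (-261) (0)); (ZZ (290) (580) (-180) (760) (0)); (ZZ (98) (196) (-61) (257) (0)); (ZZ (33) (66) (-21) (87) (0)); (ZZ (11) (22) (-7) (29) (0)); (ZZ (4) (8) (-3) (11) (0))], zc 1600, [:: (ZZ (0) (0) (0) (0) (0)); (ZZ (3) (2) (2) (3) (0)); (ZZ (1) (0) (2) (2) (0)); (ZZ (-1) (-3) (-1) (0) (0)); (ZZ (0) (-3) (-4) (-3) (0)); (ZZ (4) (4) (0) (-3) (0)); (ZZ (-29) (-11) (-11) (-29) (0)); (ZZ (-18) (0) (-11) (-11) (0)); (ZZ (-7) (4) (-7) (0) (0)); (ZZ (0) (4) (-3) (4) (0)); (ZZ (3) (3) (0) (4) (0))], zc 40);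
 (2%nat, [:: (ZZ (3) (6) (-1) (7) (0)); (ZZ (-2) (-4) (4) (-8) (0)); (ZZ (11) (22) (3) (19) (0)); (ZZ (4) (8) (32) (-24) (0)); (ZZ (75) (150) (75) (75) (0)); (ZZ (-1412) (-2824) (854) (-3678) (0)); (ZZ (1783) (3566) (-1041) (4607) (0)); (ZZ (-3494) (-6988) (2338) (-9326) (0)); (ZZ (6459) (12918) (-3353) (16271) (0)); (ZZ (-10200) (-20400) (8550) (-28950) (0)); (ZZ (-6456) (-12912) (3352) (-16264) (0)); (ZZ (-3496) (-6992) (2342) (-9334) (0)); (ZZ (-1772) (-3544) (1044) (-4588) (0)); (ZZ (-1408) (-2816) (886) (-3702) (0)); (ZZ (0) (0) (0) (0) (0)); (ZZ (-1408) (-2816) (886) (-3702) (0)); (ZZ (1772) (3544) (-1044) (4588) (0)); (ZZ (-3496) (-6992) (2342) (-9334) (0)); (ZZ (6456) (12912) (-3352) (16264) (0)); (ZZ (-10200) (-20400) (8550) (-28950) (0)); (ZZ (-6459) (-12918) (3353) (-16271) (0)); (ZZ (-3494) (-6988) (2338) (-9326) (0)); (ZZ (-1783) (-3566) (1041) (-4607) (0)); (ZZ (-1412) (-2824) (854) (-3678) (0)); (ZZ (-75) (-150) (-75) (-75) (0)); (ZZ (4) (8) (32) (-24) (0)); (ZZ (-11) (-22) (-3) (-19) (0)); (ZZ (-2) (-4) (4) (-8) (0)); (ZZ (-3) (-6) (1) (-7) (0))], zc 1600, [:: (ZZ (0) (0) (0) (0) (0)); (ZZ (0) (-1) (2) (-1)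 (0)); (ZZ (-2) (-2) (0) (-1) (0)); (ZZ (-2) (-3) (-3) (-2) (0)); (ZZ (1) (0) (-3) (-3) (0)); (ZZ (4) (7) (4) (0) (0)); (ZZ (0) (18) (-11) (18) (0)); (ZZ (11) (11) (0) (18) (0)); (ZZ (11) (4) (4) (11) (0)); (ZZ (7) (0) (4) (4) (0)); (ZZ (3) (-1) (3) (0) (0))], zc 40);
 (1%nat, [:: (ZZ (-1) (-2) (0) (-2) (0)); (ZZ (1) (2) (1) (1) (0)); (ZZ (-3) (-6) (-3) (-3) (0)); (ZZ (7) (14) (10) (4) (0)); (ZZ (-20) (-40) (-30) (-10) (0)); (ZZ (-171) (-342) (90) (-432) (0)); (ZZ (61) (122) (-39) (161) (0)); (ZZ (-193) (-386) (107) (-493) (0)); (ZZ (147) (294) (-60) (354) (0)); (ZZ (-280) (-560) (80) (-640) (0)); (ZZ (-147) (-294) (60) (-354) (0)); (ZZ (-193) (-386) (107) (-493) (0)); (ZZ (-61) (-122) (39) (-161) (0)); (ZZ (-171) (-342) (90) (-432) (0)); (ZZ (20) (40) (30) (10) (0)); (ZZ (7) (14) (10) (4) (0)); (ZZ (3) (6) (3) (3) (0)); (ZZ (1) (2) (1) (1) (0)); (ZZ (1) (2) (0) (2) (0))], zc 80, [:: (ZZ (0) (0) (0) (0) (0)); (ZZ (-2) (1) (-1) (2) (0)); (ZZ (-1) (-2) (-3) (1) (0)); (ZZ (2) (-1) (-4) (-2) (0)); (ZZ (6) (7) (3) (-1) (0)); (ZZ (3) (11) (14) (7) (0)); (ZZ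 (11) (-18) (18) (-11) (0)); (ZZ (-7) (-14) (4) (-18) (0)); (ZZ (-11) (-7) (-3) (-14) (0)); (ZZ (-8) (-1) (-4) (-7) (0)); (ZZ (-4) (2) (-2) (-1) (0))], zc 20);
 (0%nat, [:: (ZZ (0) (0) (0) (0) (0)); (ZZ (-1) (-2) (1) (-3) (0)); (ZZ (-1) (-2) (1) (-3) (0)); (ZZ (-2) (-4) (2) (-6) (0)); (ZZ (-3) (-6) (3) (-9) (0)); (ZZ (-5) (-10) (5) (-15) (0)); (ZZ (3) (6) (-3) (9) (0)); (ZZ (-2) (-4) (2) (-6) (0)); (ZZ (1) (2) (-1) (3) (0)); (ZZ (-1) (-2) (1) (-3) (0))], zc 80, [:: (ZZ (0) (0) (0) (0) (0)); (ZZ (-2) (1) (-1) (2) (0)); (ZZ (-1) (-2) (2) (1) (0)); (ZZ (-3) (-1) (1) (3) (0)); (ZZ (-4) (-3) (3) (4) (0)); (ZZ (-7) (-4) (4) (7) (0)); (ZZ (11) (-18) (18) (-11) (0)); (ZZ (-7) (11) (-11) (7) (0)); (ZZ (4) (-7) (7) (-4) (0)); (ZZ (-3) (4) (-4) (3) (0)); (ZZ (1) (-3) (3) (-1) (0))], zc 20);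
 (0%nat, [:: (ZZ (3) (6) (-1) (7) (0)); (ZZ (0) (0) (0) (0) (0)); (ZZ (0) (0) (0) (0) (0)); (ZZ (0) (0) (0) (0) (0)); (ZZ (0) (0) (0) (0) (0)); (ZZ (-33) (-66) (11) (-77) (0)); (ZZ (0) (0) (0) (0) (0)); (ZZ (0) (0) (0) (0) (0)); (ZZ (0) (0) (0) (0) (0)); (ZZ (0) (0) (0) (0) (0)); (ZZ (-3) (-6) (1) (-7) (0))], zc 400, [:: (ZZ (0) (0) (0) (0) (0)); (ZZ (-2) (1) (-1) (2) (0)); (ZZ (-1) (3) (2) (1) (0)); (ZZ (2) (4) (1) (-2) (0)); (ZZ (1) (-3) (-7) (-6) (0)); (ZZ (-7) (-14) (-11) (-3) (0)); (ZZ (11) (-18) (18) (-11) (0)); (ZZ (18) (-4) (14) (7) (0)); (ZZ (14) (3) (7) (11) (0)); (ZZ (7) (4) (1) (8) (0)); (ZZ (1) (2) (-2) (4) (0))], zc 20);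
 (1%nat, [:: (ZZ (-4) (-8) (3) (-11) (0)); (ZZ (11) (22) (-7) (29) (0)); (ZZ (-33) (-66) (21) (-87) (0)); (ZZ (98) (196) (-61) (257) (0)); (ZZ (-290) (-580) (180) (-760) (0)); (ZZ (-54) (-108) (153) (-261) (0)); (ZZ (-29) (-58) (-27) (-31) (0)); (ZZ (-23) (-46) (151) (-197) (0)); (ZZ (168) (336) (-201) (537) (0)); (ZZ (-560) (-1120) (520) (-1640) (0)); (ZZ (-168) (-336) (201) (-537) (0)); (ZZ (-23) (-46) (151) (-197) (0)); (ZZ (29) (58) (27) (31) (0)); (ZZ (-54) (-108) (153) (-261) (0)); (ZZ (290) (580) (-180) (760) (0)); (ZZ (98) (196) (-61) (257) (0)); (ZZ (33) (66) (-21) (87) (0)); (ZZ (11) (22) (-7) (29) (0)); (ZZ (4) (8) (-3) (11) (0))], zc 1600, [:: (ZZ (0) (0) (0) (0) (0)); (ZZ (0) (-1) (2) (-1) (0)); (ZZ (-1) (0) (-2) (-2) (0)); (ZZ (-1) (-1) (0) (2) (0)); (ZZ (3) (4) (3) (0) (0)); (ZZ (-3) (-7) (-7) (-3) (0)); (ZZ (0) (18) (-11) (18) (0)); (ZZ (18) (0) (11) (11) (0)); (ZZ (-7) (-7) (0) (-11) (0)); (ZZ (-4) (3) (-4) (0) (0)); (ZZ (4) (1) (1) (4) (0))], zc 40);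
 (0%nat, [:: (ZZ (1) (2) (-1) (3) (0)); (ZZ (0) (0) (0) (0) (0)); (ZZ (0) (0) (0) (0) (0)); (ZZ (0) (0) (0) (0) (0)); (ZZ (0) (0) (0) (0) (0)); (ZZ (-11) (-22) (11) (-33) (0)); (ZZ (0) (0) (0) (0) (0)); (ZZ (0) (0) (0) (0) (0)); (ZZ (0) (0) (0) (0) (0)); (ZZ (0) (0) (0) (0) (0)); (ZZ (-1) (-2) (1) (-3) (0))], zc 1600, [:: (ZZ (-2) (-1) (0) (-2) (0)); (ZZ (0) (0) (0) (0) (0)); (ZZ (0) (0) (0) (0) (0)); (ZZ (0) (0) (0) (0) (0)); (ZZ (0) (0) (0) (0) (0)); (ZZ (22) (11) (0) (22) (0)); (ZZ (0) (0) (0) (0) (0)); (ZZ (0) (0) (0) (0) (0)); (ZZ (0) (0) (0) (0) (0)); (ZZ (0) (0) (0) (0) (0)); (ZZ (2) (1) (0) (2) (0))], zc 40);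
 (0%nat, [:: (ZZ (-1) (-2) (1) (-3) (0)); (ZZ (0) (0) (0) (0) (0)); (ZZ (0) (0) (0) (0) (0)); (ZZ (0) (0) (0) (0) (0)); (ZZ (0) (0) (0) (0) (0)); (ZZ (11) (22) (-11) (33) (0)); (ZZ (0) (0) (0) (0) (0)); (ZZ (0) (0) (0) (0) (0)); (ZZ (0) (0) (0) (0) (0)); (ZZ (0) (0) (0) (0) (0)); (ZZ (1) (2) (-1) (3) (0))], zc 1600, [:: (ZZ (-1) (1) (-1) (1) (0)); (ZZ (0) (0) (0) (0) (0)); (ZZ (0) (0) (0) (0) (0)); (ZZ (0) (0) (0) (0) (0)); (ZZ (0) (0) (0) (0) (0)); (ZZ (11) (-11) (11) (-11) (0)); (ZZ (0) (0) (0) (0) (0)); (ZZ (0) (0) (0) (0) (0)); (ZZ (0) (0) (0) (0) (0)); (ZZ (0) (0) (0) (0) (0)); (ZZ (1) (-1) (1) (-1) (0))], zc 40);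
 (0%nat, [:: (ZZ (0) (0) (0) (0) (0)); (ZZ (-1) (-2) (1) (-3) (0)); (ZZ (-1) (-2) (1) (-3) (0)); (ZZ (-2) (-4) (2) (-6) (0)); (ZZ (-3) (-6) (3) (-9) (0)); (ZZ (-5) (-10) (5) (-15) (0)); (ZZ (3) (6) (-3) (9) (0)); (ZZ (-2) (-4) (2) (-6) (0)); (ZZ (1) (2) (-1) (3) (0)); (ZZ (-1) (-2) (1) (-3) (0))], zc 80, [:: (ZZ (0) (0) (0) (0) (0)); (ZZ (-2) (1) (-1) (2) (0)); (ZZ (-1) (-2) (-3) (1) (0)); (ZZ (2) (-1) (-4) (-2) (0)); (ZZ (6) (7) (3) (-1) (0)); (ZZ (3) (11) (14) (7) (0)); (ZZ (11) (-18) (18) (-11) (0)); (ZZ (-7) (-14) (4) (-18) (0)); (ZZ (-11) (-7) (-3) (-14) (0)); (ZZ (-8) (-1) (-4) (-7) (0)); (ZZ (-4) (2) (-2) (-1) (0))], zc 20);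
 (0%nat, [::], zc 1, [::], zc 1);
 (0%nat, [:: (ZZ (0) (0) (0) (0) (0)); (ZZ (4) (8) (-3) (11) (0)); (ZZ (4) (8) (-3) (11) (0)); (ZZ (8) (16) (-6) (22) (0)); (ZZ (12) (24) (-9) (33) (0)); (ZZ (20) (40) (-15) (55) (0)); (ZZ (-12) (-24) (9) (-33) (0)); (ZZ (8) (16) (-6) (22) (0)); (ZZ (-4) (-8) (3) (-11) (0)); (ZZ (4) (8) (-3) (11) (0))], zc 1600, [:: (ZZ (0) (0) (0) (0) (0)); (ZZ (0) (-1) (2) (-1) (0)); (ZZ (2) (1) (2) (0) (0)); (ZZ (2) (0) (-1) (-1) (0)); (ZZ (-1) (-4) (-4) (-1) (0)); (ZZ (-4) (-4) (0) (3) (0)); (ZZ (0) (18) (-11) (18) (0)); (ZZ (-11) (7) (-11) (0) (0)); (ZZ (-11) (0) (-7) (-7) (0)); (ZZ (-7) (-3) (-3) (-7) (0)); (ZZ (-3) (-3) (0) (-4) (0))], zc 40);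
 (0%nat, [:: (ZZ (-2) (-4) (1) (-5) (0)); (ZZ (0) (0) (0) (0) (0)); (ZZ (0) (0) (0) (0) (0)); (ZZ (0) (0) (0) (0) (0)); (ZZ (0) (0) (0) (0) (0)); (ZZ (22) (44) (-11) (55) (0)); (ZZ (0) (0) (0) (0) (0)); (ZZ (0) (0) (0) (0) (0)); (ZZ (0) (0) (0) (0) (0)); (ZZ (0) (0) (0) (0) (0)); (ZZ (2) (4) (-1) (5) (0))], zc 1600, [:: (ZZ (1) (2) (0) (2) (0)); (ZZ (0) (0) (0) (0) (0)); (ZZ (0) (0) (0) (0) (0)); (ZZ (0) (0) (0) (0) (0)); (ZZ (0) (0) (0) (0) (0)); (ZZ (-11) (-22) (0) (-22) (0)); (ZZ (0) (0) (0) (0) (0)); (ZZ (0) (0) (0) (0) (0)); (ZZ (0) (0) (0) (0) (0)); (ZZ (0) (0) (0) (0) (0)); (ZZ (-1) (-2) (0) (-2) (0))], zc 40);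
 (0%nat, [:: (ZZ (2) (4) (-1) (5) (0)); (ZZ (0) (0) (0) (0) (0)); (ZZ (0) (0) (0) (0) (0)); (ZZ (0) (0) (0) (0) (0)); (ZZ (0) (0) (0) (0) (0)); (ZZ (-22) (-44) (11) (-55) (0)); (ZZ (0) (0) (0) (0) (0)); (ZZ (0) (0) (0) (0) (0)); (ZZ (0) (0) (0) (0) (0)); (ZZ (0) (0) (0) (0) (0)); (ZZ (-2) (-4) (1) (-5) (0))], zc 1600, [:: (ZZ (-1) (1) (-1) (1) (0)); (ZZ (0) (0) (0) (0) (0)); (ZZ (0) (0) (0) (0) (0)); (ZZ (0) (0) (0) (0) (0)); (ZZ (0) (0) (0) (0) (0)); (ZZ (11) (-11) (11) (-11) (0)); (ZZ (0) (0) (0) (0) (0)); (ZZ (0) (0) (0) (0) (0)); (ZZ (0) (0) (0) (0) (0)); (ZZ (0) (0) (0) (0) (0)); (ZZ (1) (-1) (1) (-1) (0))], zc 40);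
 (0%nat, [:: (ZZ (-3) (-6) (1) (-7) (0)); (ZZ (0) (0) (0) (0) (0)); (ZZ (0) (0) (0) (0) (0)); (ZZ (0) (0) (0) (0) (0)); (ZZ (0) (0) (0) (0) (0)); (ZZ (33) (66) (-11) (77) (0)); (ZZ (0) (0) (0) (0) (0)); (ZZ (0) (0) (0) (0) (0)); (ZZ (0) (0) (0) (0) (0)); (ZZ (0) (0) (0) (0) (0)); (ZZ (3) (6) (-1) (7) (0))], zc 400, [:: (ZZ (0) (0) (0) (0) (0)); (ZZ (-2) (1) (-1) (2) (0)); (ZZ (-1) (-2) (-3) (1) (0)); (ZZ (2) (-1) (-4) (-2) (0)); (ZZ (6) (7) (3) (-1) (0)); (ZZ (3) (11) (14) (7) (0)); (ZZ (11) (-18) (18) (-11) (0)); (ZZ (-7) (-14) (4) (-18) (0)); (ZZ (-11) (-7) (-3) (-14) (0)); (ZZ (-8) (-1) (-4) (-7) (0)); (ZZ (-4) (2) (-2) (-1) (0))], zc 20);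
 (0%nat, [:: (ZZ (0) (0) (0) (0) (0)); (ZZ (4) (8) (-3) (11) (0)); (ZZ (4) (8) (-3) (11) (0)); (ZZ (8) (16) (-6) (22) (0)); (ZZ (12) (24) (-9) (33) (0)); (ZZ (20) (40) (-15) (55) (0)); (ZZ (-12) (-24) (9) (-33) (0)); (ZZ (8) (16) (-6) (22) (0)); (ZZ (-4) (-8) (3) (-11) (0)); (ZZ (4) (8) (-3) (11) (0))], zc 1600, [:: (ZZ (0) (0) (0) (0) (0)); (ZZ (0) (-1) (2) (-1) (0)); (ZZ (0) (2) (1) (2) (0)); (ZZ (0) (1) (3) (1) (0)); (ZZ (0) (3) (4) (3) (0)); (ZZ (0) (4) (7) (4) (0)); (ZZ (0) (18) (-11) (18) (0)); (ZZ (0) (-11) (7) (-11) (0)); (ZZ (0) (7) (-4) (7) (0)); (ZZ (0) (-4) (3) (-4) (0)); (ZZ (0) (3) (-1) (3) (0))], zc 40);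
 (0%nat, [::], zc 1, [::], zc 1)].

Definition Sz : zmat := (ZZ 0 1 0 0 0, zc 0, zc 0, zc 1).
Definition Tz : zmat := (ZZ (-1) (-1) 1 1 (-1), zc 2, zc 2, ZZ 1 1 (-1) (-1) 1).
Definition Uz : zmat := (zc 0, zc (-1), zc 1, zc 0).
Definition Iz : zmat := (zc 1, zc 0, zc 0, zc 1).
Definition Hmats := [:: Iz; Tz; Uz; mmul Tz Uz].
Definition FV := map zc [:: 0; -1; 0; 0; 0; 0; 11; 0; 0; 0; 0; 1].
Definition FF := map zc [:: 1; 0; 0; 0; 0; 228; 0; 0; 0; 0; 494; 0; 0; 0; 0; -228; 0; 0; 0; 0; 1].
Definition FE := map zc [:: 1; 0; 0; 0; 0; -522; 0; 0; 0; 0; -10005; 0; 0; 0; 0; 0; 0; 0; 0; 0; -10005; 0; 0; 0; 0; 522; 0; 0; 0; 0; 1].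
Local Close Scope Z_scope.

Definition W (i : nat) := nth Iz Ws i.
Definition tab_ok (i : nat) : bool :=
  let: ((sj, sd, sc), (tj, td, tc)) := nth ((0%nat, zc 1, zc 1), (0%nat, zc 1, zc 1)) Tab i in
  [&& (sj < 60)%nat, (tj < 60)%nat, nzcheck sd, nzcheck sc, nzcheck td, nzcheck tc,
      meqb (mscale sd (mmul Sz (W i))) (mscale sc (W sj)) &
      meqb (mscale td (mmul Tz (W i))) (mscale tc (W tj))].
Definition hl_ok (x : nat * nat * zz * zz) : bool :=
  let: (i, k, d, c) := x in
  [&& (k < 4)%nat, nzcheck d, nzcheck c & meqb (mscale d (nth Iz Hmats k)) (mscale c (W i))].
Definition Hidx := map (fun x : nat * nat * zz * zz => let: (i, _, _, _) := x in i) Hl.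
Definition Qpoly (A : zmat) : seq zz :=
  let: (p, q, r, s) := A in
  [:: zadd (zmul q (zconj s)) (zneg (zmul (zconj q) s));
      zadd (zadd (zmul p (zconj s)) (zmul q (zconj r))) (zneg (zadd (zmul (zconj p) s) (zmul (zconj q) r)));
      zadd (zmul p (zconj r)) (zneg (zmul (zconj p) r))].
Definition Fsel (t : nat) := nth FV [:: FV; FF; FE] t.
Definition cert_ok (i : nat) : bool :=
  (i \in Hidx) ||
  let: (typ, g, c, gd, cd) := nth (0%nat, [::], zc 1, [::], zc 1) Certs i in
  let: (p, q, r, s) := W i in
  [&& nzcheck c, nzcheck cd, pcert [:: s; r] gd FV cd & pcert (Qpoly (W i)) g (Fsel typ) c].
Definition all_ok := [&& size Ws == 60%nat, all tab_ok (iota 0 60), all hl_ok Hl & all cert_ok (iota 0 60)].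

Lemma all_okT : all_ok = true.
Proof. vm_compute. reflexivity. Qed.

Section FL.
Variable K : fieldType.
Variables x j : K.
Hypothesis h5 : (5%:R : K) != 0.
Hypothesis G0 : Gfun x j = 0.
Hypothesis j0 : j != 0.
Hypothesis j1728 : j != 1728%:R.
Let k := 1 - 11%:R * x - x ^+ 2.
Let h := x ^+ 4 - 228%:R * x ^+ 3 + 494%:R * x ^+ 2 + 228%:R * x + 1.
Let t := x ^+ 6 + 522%:R * x ^+ 5 - (2001%:R * 5%:R) * x ^+ 4 - (2001%:R * 5%:R) * x ^+ 2 - 522%:R * x + 1.

Lemma hG : h ^+ 3 = j * (x * k) * k ^+ 4.
Proof. by move: G0; rewrite /Gfun -/k -/h => /eqP; rewrite subr_eq0 => /eqP ->; ring. Qed.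

Lemma bez : (-679478%:R - 1485989%:R * x + 684695%:R * x ^+ 2 - 3003%:R * x ^+ 3) * (x * k)
   + (3125%:R - 33022%:R * x - 3003%:R * x ^+ 2) * h = 3125%:R.
Proof. rewrite /k /h; ring. Qed.

Lemma n3125 : (3125%:R : K) != 0.
Proof. by rewrite (_ : 3125 = expn 5 5)%nat // natrX expf_neq0. Qed.

Lemma LV : x * k != 0.
Proof.
apply/negP => /eqP H.
have : h ^+ 3 == 0 by rewrite hG H mulr0 mul0r.
rewrite expf_eq0 /= => /eqP hh.
by move: bez; rewrite H hh !mulr0 addr0 => /esym /eqP; rewrite (negbTE n3125).
Qed.

Lemma LF : h != 0.
Proof.
apply/negP => /eqP hh.
have := hG; rewrite hh expr0n /= => /esym /eqP.
rewrite mulf_eq0 mulf_eq0 (negbTE j0) (negbTE LV) /= expf_eq0 /=.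
move=> /eqP k0.
by move: LV; rewrite k0 mulr0 eqxx.
Qed.

Lemma klein : t ^+ 2 = h ^+ 3 - 1728%:R * (x * k) * k ^+ 4.
Proof. rewrite /t /h /k; ring. Qed.

Lemma LE : t != 0.
Proof.
apply/negP => /eqP t0.
have := klein; rewrite t0 expr0n /= hG => /eqP.
rewrite -mulrBl -mulrBl eq_sym mulf_eq0 mulf_eq0 subr_eq0 (negbTE j1728) (negbTE LV) /= expf_eq0 /=.
move=> /eqP k0.
by move: LV; rewrite k0 mulr0 eqxx.
Qed.
End FL.

Section Eng.
Variable K : fieldType.
Definition zK (z : Z) : K := (int_of_Z z)%:~R.
Lemma zKD a b : zK (a + b)%Z = zK a + zK b.
Proof. by rewrite /zK -intrD -rmorphD. Qed.
Lemma zKM a b : zK (a * b)%Z = zK a * zK b.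
Proof. by rewrite /zK -intrM -rmorphM. Qed.
Lemma zKN a : zK (- a)%Z = - zK a.
Proof. by rewrite /zK -intrN -rmorphN. Qed.
Lemma zK0 : zK 0 = 0. Proof. by []. Qed.
Lemma zK1 : zK 1 = 1. Proof. by rewrite /zK /=. Qed.
Lemma zKpos (p : positive) : zK (Zpos p) = (Pos.to_nat p)%:R.
Proof. by rewrite /zK /int_of_Z. Qed.

Lemma zK2 : zK 2 = 2%:R. Proof. by rewrite /zK /=. Qed.
Lemma zK3 : zK 3 = 3%:R. Proof. by rewrite /zK /=. Qed.
Lemma zK5 : zK 5 = 5%:R. Proof. by rewrite /zK /=. Qed.

Variable w : K.
Hypothesis w5 : w ^+ 5 = 1.
Hypothesis wsum : 1 + w + w ^+ 2 + w ^+ 3 + w ^+ 4 = 0.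

Definition ev (x : zz) : K :=
  zK (z0 x) + zK (z1 x) * w + zK (z2 x) * w ^+ 2 + zK (z3 x) * w ^+ 3 + zK (z4 x) * w ^+ 4.

Lemma ev_add x y : ev (zadd x y) = ev x + ev y.
Proof. case: x => ? ? ? ? ?; case: y => ? ? ? ? ?; rewrite /ev /= !zKD. ring. Qed.
Lemma ev_neg x : ev (zneg x) = - ev x.
Proof. case: x => ? ? ? ? ?; rewrite /ev /= !zKN; ring. Qed.
Lemma ev_mul x y : ev (zmul x y) = ev x * ev y.
Proof. case: x => ? ? ? ? ?; case: y => ? ? ? ? ?; rewrite /ev /= !zKD !zKM; ring: w5. Qed.
Lemma ev_zc n : ev (zc n) = zK n.
Proof. by rewrite /ev /= !zK0; ring. Qed.

Lemma zeqb_ok x y : zeqb x y -> ev x = ev y.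
Proof.
rewrite /zeqb; set d := zadd x (zneg y).
have -> : ev x = ev y + ev d by rewrite /d ev_add ev_neg; ring.
move: d => [a b c e f] /=.
case/and4P => /Z.eqb_eq -> /Z.eqb_eq -> /Z.eqb_eq -> /Z.eqb_eq ->.
rewrite /ev /=.
have -> : zK a + zK a * w + zK a * w ^+ 2 + zK a * w ^+ 3 + zK a * w ^+ 4 = zK a * (1 + w + w ^+ 2 + w ^+ 3 + w ^+ 4) by ring.
by rewrite wsum mulr0 addr0.
Qed.

Hypothesis h2 : (2%:R : K) != 0.
Hypothesis h3 : (3%:R : K) != 0.
Hypothesis h5 : (5%:R : K) != 0.

Lemma smf_ok f n : smf f n -> zK n != 0.
Proof.
elim: f n => [|f IH] n //=.
case: ifP => [/Z.eqb_eq H _|_].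
  have [->|->] : (n = 1 \/ n = -1)%Z by lia.
  + by rewrite zK1 oner_neq0.
  + by rewrite (_ : (-1)%Z = Z.opp 1) // zKN zK1 oppr_eq0 oner_neq0.
case: ifP => [/Z.eqb_eq H /IH H'|_].
  have -> : n = (2 * (n / 2))%Z by apply: Z_div_exact_full_2.
  by rewrite zKM zK2 mulf_neq0.
case: ifP => [/Z.eqb_eq H /IH H'|_].
  have -> : n = (3 * (n / 3))%Z by apply: Z_div_exact_full_2.
  by rewrite zKM zK3 mulf_neq0.
case: ifP => [/Z.eqb_eq H /IH H'|_] //.
have -> : n = (5 * (n / 5))%Z by apply: Z_div_exact_full_2.
by rewrite zKM zK5 mulf_neq0.
Qed.

Lemma nzcheck_ok x : nzcheck x -> ev x != 0.
Proof.
rewrite /nzcheck => /andP [/zeqb_ok H /smf_ok H'].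
apply: contra H' => /eqP H0.
by rewrite -ev_zc -H ev_mul H0 mul0r.
Qed.

Variable l : nat.
Hypothesis chK : l \in [pchar K].
Hypothesis wl : w ^+ l = w ^+ 4.

Lemma zK_frob a : zK a ^+ l = zK a.
Proof. by rewrite -(pFrobenius_autE chK) /zK rmorph_int. Qed.

Lemma ev_conj x : ev (zconj x) = ev x ^+ l.
Proof.
rewrite -(pFrobenius_autE chK); case: x => a b c d e.
rewrite /ev /= !rmorphD !rmorphM ?rmorphXn /= !pFrobenius_autE !zK_frob wl.
ring: w5.
Qed.

Definition peval (p : seq zz) (a : K) := foldr (fun c acc => ev c + a * acc) 0 p.
Lemma peval_add p q a : peval (padd p q) a = peval p a + peval q a.
Proof.
elim: p q => [|c p IH] [|d q] /=; rewrite ?add0r ?addr0 //.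
by rewrite IH ev_add; ring.
Qed.
Lemma peval_scale c q a : peval (map (zmul c) q) a = ev c * peval q a.
Proof. elim: q => [|d q IH] /=; first by rewrite mulr0. by rewrite IH ev_mul; ring. Qed.
Lemma peval_mul p q a : peval (pmul p q) a = peval p a * peval q a.
Proof.
elim: p => [|c p IH] /=; first by rewrite mul0r.
by rewrite peval_add peval_scale /= IH ev_zc zK0; ring.
Qed.
Lemma peval_neg p a : peval (map zneg p) a = - peval p a.
Proof. elim: p => [|d p IH] /=; first by rewrite oppr0. by rewrite IH ev_neg; ring. Qed.
Lemma pnull_ok p a : pnull p -> peval p a = 0.
Proof.
elim: p => [|c p IH] //= /andP [/zeqb_ok -> /IH ->].
by rewrite ev_zc zK0; ring.
Qed.

Lemma pcert_ok Q g F c a : pcert Q g F c -> peval Q a * peval g a = ev c * peval F a.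
Proof.
move/(pnull_ok _ a); rewrite peval_add peval_neg peval_scale peval_mul => /eqP.
by rewrite subr_eq0 => /eqP.
Qed.

Definition mev (A : zmat) : 'M[K]_2 :=
  let: (p, q, r, s) := A in mx2 (ev p) (ev q) (ev r) (ev s).
Lemma mx2_mul (a b c d e f g h : K) :
  mx2 a b c d *m mx2 e f g h = mx2 (a * e + b * g) (a * f + b * h) (c * e + d * g) (c * f + d * h).
Proof.
apply/matrixP => i k; rewrite !mxE !big_ord_recl big_ord0 !mxE /=.
by case: i => [[|[|]]] //= _; case: k => [[|[|]]] //= _; rewrite addr0.
Qed.
Lemma mx2_scale (k a b c d : K) : k *: mx2 a b c d = mx2 (k * a) (k * b) (k * c) (k * d).
Proof.
apply/matrixP => i j; rewrite !mxE.
by case: i => [[|[|]]] //= _; case: j => [[|[|]]] //= _.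
Qed.
Lemma mev_mul A B : mev (mmul A B) = mev A *m mev B.
Proof.
by case: A => [[[a b] c] d]; case: B => [[[e f] g] h]; rewrite /= mx2_mul !ev_add !ev_mul.
Qed.
Lemma mev_scale k A : mev (mscale k A) = ev k *: mev A.
Proof. by case: A => [[[a b] c] d]; rewrite /= mx2_scale !ev_mul. Qed.
Lemma meqb_ok A B : meqb A B -> mev A = mev B.
Proof.
case: A => [[[a b] c] d]; case: B => [[[e f] g] h] /=.
by case/and4P => /zeqb_ok -> /zeqb_ok -> /zeqb_ok -> /zeqb_ok ->.
Qed.
Lemma mx2_00 (a b c d : K) : mx2 a b c d ord0 ord0 = a. Proof. by rewrite mxE. Qed.
Lemma mx2_01 (a b c d : K) : mx2 a b c d ord0 ord_max = b. Proof. by rewrite mxE. Qed.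
Lemma mx2_10 (a b c d : K) : mx2 a b c d ord_max ord0 = c. Proof. by rewrite mxE. Qed.
Lemma mx2_11 (a b c d : K) : mx2 a b c d ord_max ord_max = d. Proof. by rewrite mxE. Qed.


Lemma zKm1 : zK (-1) = -1.
Proof. by rewrite (_ : (-1)%Z = Z.opp 1) // zKN zK1. Qed.
Lemma zKneg p : zK (Zneg p) = - (Pos.to_nat p)%:R.
Proof. by rewrite (_ : Zneg p = Z.opp (Zpos p)) // zKN zKpos. Qed.

Lemma mevS : mev Sz = Smx w.
Proof. by rewrite /mev /Sz /Smx !ev_zc zK0 zK1 /ev /= zK0 zK1; congr mx2; ring. Qed.
Lemma mevT : mev Tz = Tmx w.
Proof. rewrite /mev /Tz /Tmx /sqrt5 !ev_zc zK2; congr mx2; rewrite /ev /= zK1 zKm1; ring. Qed.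
Lemma mevU : mev Uz = Umx K.
Proof. by rewrite /mev /Uz /Umx !ev_zc zK0 zKm1 zK1. Qed.
Lemma mevI : mev Iz = 1%:M.
Proof.
rewrite /mev /Iz !ev_zc zK0 zK1; apply/matrixP => i k; rewrite !mxE.
by case: i => [[|[|//]] Hi]; case: k => [[|[|//]] Hk].
Qed.

Lemma allT : [&& size Ws == 60%nat, all tab_ok (iota 0 60), all hl_ok Hl & all cert_ok (iota 0 60)].
Proof. exact: all_okT. Qed.

Lemma W_tab i : (i < 60)%nat ->
  (exists j d c, (j < 60)%nat /\ ev d != 0 /\ ev c != 0 /\ ev d *: mev (mmul Sz (W i)) = ev c *: mev (W j)) /\
  (exists j d c, (j < 60)%nat /\ ev d != 0 /\ ev c != 0 /\ ev d *: mev (mmul Tz (W i)) = ev c *: mev (W j)).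
Proof.
move=> Hi; case/and4P: allT => _ /allP Ht _ _.
have := Ht i; rewrite mem_iota add0n Hi => /(_ isT).
rewrite /tab_ok; case: (nth _ Tab i) => [[[sj sd] sc] [[tj td] tc]].
case/andP => Hsj /andP [Htj /andP [Hsd /andP [Hsc /andP [Htd /andP [Htc /andP [ES ET]]]]]].
split.
- exists sj, sd, sc; split => //; split; first exact: nzcheck_ok.
  split; first exact: nzcheck_ok.
  by rewrite -!mev_scale; apply: meqb_ok.
- exists tj, td, tc; split => //; split; first exact: nzcheck_ok.
  split; first exact: nzcheck_ok.
  by rewrite -!mev_scale; apply: meqb_ok.
Qed.

Lemma solve_scale (d c : K) (X Y : 'M[K]_2) : d != 0 -> d *: X = c *: Y -> X = (c / d) *: Y.
Proof.
by move=> Hd H; apply: (scalerI Hd); rewrite H scalerA mulrCA mulfV // mulr1.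
Qed.

Lemma enumM M : G60mx w M -> exists i e, (i < 60)%nat /\ e != 0 /\ M = e *: mev (W i).
Proof.
elim => [|M' HM' [i [e [Hi [He ->]]]]|M' HM' [i [e [Hi [He ->]]]]].
- exists 0%nat, 1; split => //; split; first exact: oner_neq0.
  by rewrite scale1r (_ : W 0 = Iz) // mevI.
- have [[j [d [c [Hj [Hd [Hc H]]]]]] _] := W_tab i Hi.
  exists j, (e * (ev c / ev d)); split => //; split.
    by rewrite mulf_neq0 // mulf_neq0 // invr_neq0.
  by rewrite -mevS -scalemxAr -mev_mul (solve_scale _ _ _ _ Hd H) scalerA.
- have [_ [j [d [c [Hj [Hd [Hc H]]]]]]] := W_tab i Hi.
  exists j, (e * (ev c / ev d)); split => //; split.
    by rewrite mulf_neq0 // mulf_neq0 // invr_neq0.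
  by rewrite -mevT -scalemxAr -mev_mul (solve_scale _ _ _ _ Hd H) scalerA.
Qed.

Lemma inmap (T : Type) (f : T -> nat) (s : seq T) i :
  i \in map f s -> exists x, List.In x s /\ f x = i.
Proof.
elim: s => [|y s IH] //=; rewrite in_cons => /orP [/eqP ->|/IH [x [Hx Hf]]].
- by exists y; split => //; left.
- by exists x; split => //; right.
Qed.
Lemma allIn (T : Type) (p : pred T) (s : seq T) x : all p s -> List.In x s -> p x.
Proof. elim: s => [|y s IH] //= /andP [Hy Hs] [<-|Hx] //; exact: IH. Qed.

Lemma inH i e : i \in Hidx -> e != 0 -> in_Hbar w (e *: mev (W i)).
Proof.
move=> /inmap [[[[i0 k] d] c] [Hx <-]] He.
case/and4P: allT => _ _ Hh _.
have := allIn _ _ _ _ Hh Hx; rewrite /hl_ok.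
case/andP => Hk /andP [/nzcheck_ok Hd /andP [/nzcheck_ok Hc E]].
move/meqb_ok: E; rewrite !mev_scale => /esym E.
rewrite (solve_scale _ _ _ _ Hc E) scalerA.
exists (e * (ev d / ev c)); split; first by rewrite mulf_neq0 // mulf_neq0 // invr_neq0.
case: k Hk {Hx E} => [|[|[|[|]]]] // _.
- by left; rewrite -[nth Iz Hmats 0]/Iz mevI.
- by right; left; rewrite -[nth Iz Hmats 1]/Tz mevT.
- by right; right; left; rewrite -[nth Iz Hmats 2]/Uz mevU.
- by right; right; right; rewrite -[nth Iz Hmats 3]/(mmul Tz Uz) mev_mul mevT mevU.
Qed.

Lemma Qpoly_ok p q r s a : peval (Qpoly (p, q, r, s)) a =
  (ev p * a + ev q) * (ev (zconj r) * a + ev (zconj s)) -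
  (ev (zconj p) * a + ev (zconj q)) * (ev r * a + ev s).
Proof. rewrite /Qpoly /peval /= !(ev_add, ev_neg, ev_mul). ring. Qed.

Lemma frob_lin p q a : a ^+ l = a -> (ev p * a + ev q) ^+ l = ev (zconj p) * a + ev (zconj q).
Proof.
move=> Ha; rewrite -(pFrobenius_autE chK) rmorphD rmorphM /= !pFrobenius_autE Ha.
by rewrite !ev_conj.
Qed.

Lemma pFV a : a ^+ 4 * peval FV a = - (a ^+ 5 * (1 - 11%:R * a ^+ 5 - (a ^+ 5) ^+ 2)).
Proof. rewrite /peval /FV /= !ev_zc zK0 zK1 zKm1 (_ : zK 11 = 11%:R) //; ring. Qed.
Lemma pFF a : peval FF a = (a ^+ 5) ^+ 4 - 228%:R * (a ^+ 5) ^+ 3 + 494%:R * (a ^+ 5) ^+ 2 + 228%:R * a ^+ 5 + 1.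
Proof. rewrite /peval /FF /= !ev_zc zK0 zK1 (_ : zK 228 = 228%:R) // (_ : zK 494 = 494%:R) // (_ : zK (-228) = - 228%:R) //; ring. Qed.
Lemma pFE a : peval FE a = (a ^+ 5) ^+ 6 + 522%:R * (a ^+ 5) ^+ 5 - (2001%:R * 5%:R) * (a ^+ 5) ^+ 4 - (2001%:R * 5%:R) * (a ^+ 5) ^+ 2 - 522%:R * a ^+ 5 + 1.
Proof. rewrite /peval /FE /= !ev_zc zK0 zK1 (_ : zK 522 = 522%:R) // (_ : zK (-522) = - 522%:R) // (_ : zK (-10005) = - (2001%:R * 5%:R)); [ring | by rewrite -natrM]. Qed.

Lemma cert_main i e j a : (i < 60)%nat -> i \notin Hidx -> e != 0 ->
  a ^+ l = a -> Gfun (a ^+ 5) j = 0 -> j != 0 -> j != 1728%:R ->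
  ((e *: mev (W i)) ord_max ord0 * a + (e *: mev (W i)) ord_max ord_max != 0) /\
  (mobius (e *: mev (W i)) a) ^+ l != mobius (e *: mev (W i)) a.
Proof.
move=> Hi HH He Ha G0 j0 j1.
have HV : a ^+ 5 * (1 - 11%:R * a ^+ 5 - (a ^+ 5) ^+ 2) != 0 by exact: (LV K (a ^+ 5) j h5 G0).
have HF : (a ^+ 5) ^+ 4 - 228%:R * (a ^+ 5) ^+ 3 + 494%:R * (a ^+ 5) ^+ 2 + 228%:R * a ^+ 5 + 1 != 0.
  by exact: (LF K (a ^+ 5) j h5 G0 j0).
have HE : (a ^+ 5) ^+ 6 + 522%:R * (a ^+ 5) ^+ 5 - (2001%:R * 5%:R) * (a ^+ 5) ^+ 4
   - (2001%:R * 5%:R) * (a ^+ 5) ^+ 2 - 522%:R * a ^+ 5 + 1 != 0.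
  by exact: (LE K (a ^+ 5) j h5 G0 j1).
have FVnz : peval FV a != 0.
  apply: contra HV => /eqP H0; have := pFV a; rewrite H0 mulr0 => /eqP.
  by rewrite eq_sym oppr_eq0.
have Fnz t : peval (Fsel t) a != 0.
  case: t => [|[|[|t]]].
  - by rewrite -[Fsel 0]/FV.
  - by rewrite -[Fsel 1]/FF pFF.
  - by rewrite -[Fsel 2]/FE pFE.
  - by rewrite /Fsel nth_default.
case/and4P: allT => _ _ _ /allP Hc.
have := Hc i; rewrite mem_iota add0n Hi => /(_ isT); rewrite /cert_ok (negbTE HH) /=.
case: (nth _ Certs i) => [[[[typ g] c] gd] cd].
case EW: (W i) => [[[p q] r] s].
case/and4P => /nzcheck_ok Hc0 /nzcheck_ok Hcd /(pcert_ok _ _ _ _ a) Pd /(pcert_ok _ _ _ _ a) PQ.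
rewrite /mobius /mev mx2_scale !mx2_00 !mx2_01 !mx2_10 !mx2_11.
have HD : ev r * a + ev s != 0.
  apply: contra FVnz => /eqP D0; move: Pd.
  rewrite (_ : peval [:: s; r] a = ev r * a + ev s); last by rewrite /peval /=; ring.
  by rewrite D0 mul0r => /esym /eqP; rewrite mulf_eq0 (negbTE Hcd).
have -> : e * ev r * a + e * ev s = e * (ev r * a + ev s) by ring.
split; first by rewrite mulf_neq0.
have -> : (e * ev p * a + e * ev q) / (e * (ev r * a + ev s)) = (ev p * a + ev q) / (ev r * a + ev s).
  by rewrite (_ : e * ev p * a + e * ev q = e * (ev p * a + ev q)); [rewrite invfM mulrACA divff // mul1r | ring].
have HDc : ev (zconj r) * a + ev (zconj s) != 0 by rewrite -frob_lin // expf_neq0.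
rewrite expr_div_n !frob_lin //.
apply/negP; rewrite eqr_div // => /eqP E.
move: PQ; rewrite Qpoly_ok E subrr mul0r => /esym /eqP; rewrite mulf_eq0 (negbTE Hc0) /=.
by apply/negP.
Qed.

Lemma master j a1 M : j != 0 -> j != 1728%:R -> a1 ^+ l = a1 -> Gfun (a1 ^+ 5) j = 0 ->
  G60mx w M -> ~ in_Hbar w M ->
  (M ord_max ord0 * a1 + M ord_max ord_max != 0) /\ mobius M a1 ^+ l != mobius M a1.
Proof.
move=> j0 j1 Ha G0 HM HnH.
have [i [e [Hi [He EM]]]] := enumM M HM.
case HH: (i \in Hidx).
- by case: HnH; rewrite EM; apply: inH.
- by rewrite EM; apply: (cert_main i e j) => //; rewrite HH.
Qed.
End Eng.

Delimit Scope nat_scope with N.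

(* K plays the role of F_{l^2}; F_l is its subfield {x | x^l = x}. *)
Theorem proposition3p3 (l : nat) (K : finFieldType) (zeta j a1 : K) :
  prime l -> (l %% 5 = 4)%N -> #|K| = (l ^ 2)%N ->
  5.-primitive_root zeta ->
  j ^+ l = j -> j != 0 -> j != 1728%:R ->
  a1 ^+ l = a1 -> Gfun (a1 ^+ 5) j = 0 ->
  forall M : 'M[K]_2, G60mx zeta M -> ~ in_Hbar zeta M ->
    (M ord_max ord0 * a1 + M ord_max ord_max != 0) /\
    (mobius M a1) ^+ l != mobius M a1.
Proof.
move=> Hp Hm Hcard Hz Hjl j0 j1 Ha G0 M HM HnH.
have chK : l \in [pchar K] := card_finPcharP Hcard Hp.
have w5 : zeta ^+ 5 = 1 := prim_expr_order Hz.
have z1 : zeta != 1.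
  apply/eqP => z1; have := prim_order_dvd Hz 1; rewrite expr1 z1 eqxx //.
have wsum : 1 + zeta + zeta ^+ 2 + zeta ^+ 3 + zeta ^+ 4 = 0.
  have : (zeta - 1) * (1 + zeta + zeta ^+ 2 + zeta ^+ 3 + zeta ^+ 4) = 0.
    by rewrite (_ : (zeta - 1) * _ = zeta ^+ 5 - 1); [rewrite w5 subrr | ring].
  by move/eqP; rewrite mulf_eq0 subr_eq0 (negbTE z1) /= => /eqP.
have l4 : l <> 4%N by move=> E; rewrite E in Hp.
have l5 : (5 < l)%N by lia.
have hn (n : nat) : (0 < n)%N -> (n <= 5)%N -> (n%:R : K) != 0.
  move=> n0 n5; rewrite -(dvdn_pcharf chK); apply/negP => /(dvdn_leq n0) H; lia.
have h2 := hn 2%N isT isT.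
have h3 := hn 3%N isT isT.
have h5 := hn 5%N isT isT.
have wl : zeta ^+ l = zeta ^+ 4.
  by rewrite (divn_eq l 5) Hm exprD mulnC exprM w5 expr1n mul1r.
exact: (master K zeta w5 wsum h2 h3 h5 l chK wl j a1 M j0 j1 Ha G0 HM HnH).
Qed.
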